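(* Let $N\in\mathbb{N}$ with $N\ge3$ and $n\in\mathbb{N}$ with $n\ge n_N$. Then there is a real $E$ with $|E|\le 0.2\left(\frac{5}{96}\right)^{N/2}n^{-\frac{N+2}{2}}$ such that \[ \frac{e^{\frac{\pi}{3\sqrt2}\sqrt{24n+1}}}{(24n+1)\lambda(n)}=\frac{e^{2\pi\sqrt{\frac n3}}}{8\cdot3^{3/4}\sqrt\pi\,n^{5/4}}\left(\sum_{m=0}^{N+1}\frac{b^*(m)}{n^{\frac m2}}+E\right). \]
   Context: $\lambda(n):=\sqrt{\frac{\pi}{6\sqrt2}\sqrt{24n+1}}$; $n_N:=\left(\frac{3(3N+4)\log(6N+8)}{1.3^2}\right)^4$. For $m\in\mathbb{N}_0$: $e_1(0):=1$, $e_1(m):=\frac{(2m-1)!}{(-96)^m}\sum_{\nu=1}^{m}\frac{(-\pi^2/18)^\nu}{(2\nu-1)!(\nu+m)!(m-\nu)!}$ ($m\ge1$); $o_1(m):=\frac{\pi(2m)!}{24\sqrt3(-96)^m}\sum_{\nu=0}^{m}\frac{(-\pi^2/18)^\nu}{(2\nu)!(m-\nu)!(\nu+m+1)!}$; $e_2(m):=\binom{-5/4}{m}24^{-m}$; $e_1^*(m):=\sum_{k=0}^m e_1(k)e_2(m-k)$, $o_1^*(m):=\sum_{k=0}^m o_1(k)e_2(m-k)$; $b^*(2m):=e_1^*(m)$, $b^*(2m+1):=o_1^*(m)$. *)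

(* Defs.v *)
From Stdlib Require Import Reals Lra Lia Arith Factorial.
Open Scope R_scope.

Definition lam (n : nat) : R :=
  sqrt (PI / (6 * sqrt 2) * sqrt (24 * INR n + 1)).

Definition nN (N : nat) : R :=
  (3 * (3 * INR N + 4) * ln (6 * INR N + 8) / (13/10)^2) ^ 4.

(* Finite sum  sum_{k=a}^{b} f k  (empty if b < a) *)
Fixpoint sum_range (a : nat) (len : nat) (f : nat -> R) : R :=
  match len with
  | O => 0
  | S l => f a + sum_range (S a) l f
  end.
Definition sumRR (a b : nat) (f : nat -> R) : R := sum_range a (S b - a) f.

Definition fct (k : nat) : R := INR (fact k).

Definition e1 (m : nat) : R :=
  match m with
  | O => 1
  | S _ =>
    fct (2 * m - 1) / (-96) ^ m *
    sumRR 1 m (fun nu => (- PI ^ 2 / 18) ^ nu /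
                         (fct (2 * nu - 1) * fct (nu + m) * fct (m - nu)))
  end.

Definition o1 (m : nat) : R :=
  PI * fct (2 * m) / (24 * sqrt 3 * (-96) ^ m) *
  sumRR 0 m (fun nu => (- PI ^ 2 / 18) ^ nu /
                       (fct (2 * nu) * fct (m - nu) * fct (nu + m + 1))).

Fixpoint falling (a : R) (m : nat) : R :=
  match m with
  | O => 1
  | S k => falling a k * (a - INR k)
  end.
Definition gbinom (a : R) (m : nat) : R := falling a m / fct m.

Definition e2 (m : nat) : R := gbinom (-5/4) m / 24 ^ m.

Definition e1s (m : nat) : R := sumRR 0 m (fun k => e1 k * e2 (m - k)).
Definition o1s (m : nat) : R := sumRR 0 m (fun k => o1 k * e2 (m - k)).

Definition bstar (m : nat) : R :=
  if Nat.even m then e1s (Nat.div2 m) else o1s (Nat.div2 m).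

(* Main.v *)
Require Import Defs.
From Stdlib Require Import Reals Lra Lia Arith Factorial Machin.
From Coquelicot Require Import Coquelicot.
Open Scope R_scope.

Fixpoint sm (n : nat) (f : nat -> R) : R :=
  match n with O => 0 | S k => sm k f + f k end.

Lemma sm_ext n f g : (forall i, (i < n)%nat -> f i = g i) -> sm n f = sm n g.
Proof. induction n; intros H; simpl; [reflexivity|]. rewrite IHn by (intros; apply H; lia). rewrite H by lia. reflexivity. Qed.

Lemma sm_plus n f g : sm n (fun i => f i + g i) = sm n f + sm n g.
Proof. induction n; simpl; [ring|]. rewrite IHn. ring. Qed.

Lemma sm_minus n f g : sm n (fun i => f i - g i) = sm n f - sm n g.
Proof. induction n; simpl; [ring|]. rewrite IHn. ring. Qed.

Lemma sm_scal n c f : sm n (fun i => c * f i) = c * sm n f.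
Proof. induction n; simpl; [ring|]. rewrite IHn. ring. Qed.

Lemma sm_scal_r n c f : sm n (fun i => f i * c) = sm n f * c.
Proof. induction n; simpl; [ring|]. rewrite IHn. ring. Qed.

Lemma pow_S_eq (x : R) n : x ^ S n = x * x ^ n.
Proof. reflexivity. Qed.

Lemma Rabs_le_inv a b : Rabs a <= b -> - b <= a <= b.
Proof. intros H. pose proof (Rle_abs a). pose proof (Rle_abs (-a)). rewrite Rabs_Ropp in *. split; lra. Qed.

Lemma sm_zero n : sm n (fun _ => 0) = 0.
Proof. induction n; simpl; [ring|]. rewrite IHn. ring. Qed.

Lemma sm_le n f g : (forall i, (i < n)%nat -> f i <= g i) -> sm n f <= sm n g.
Proof. induction n; intros H; simpl; [lra|]. pose proof (IHn (fun i Hi => H i ltac:(lia))). pose proof (H n ltac:(lia)). lra. Qed.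

Lemma sm_nonneg n f : (forall i, (i < n)%nat -> 0 <= f i) -> 0 <= sm n f.
Proof. intros H. rewrite <- (sm_zero n). apply sm_le. exact H. Qed.

Lemma sm_abs n f : Rabs (sm n f) <= sm n (fun i => Rabs (f i)).
Proof. induction n; simpl; [rewrite Rabs_R0; lra|]. eapply Rle_trans; [apply Rabs_triang|]. lra. Qed.

Lemma sm_exch n m (f : nat -> nat -> R) :
  sm n (fun a => sm m (fun b => f a b)) = sm m (fun b => sm n (fun a => f a b)).
Proof. induction n; simpl. - rewrite sm_zero; reflexivity. - rewrite IHn, sm_plus. reflexivity. Qed.

Lemma sm_split a b f : sm (a + b) f = sm a f + sm b (fun i => f (a + i)%nat).
Proof. induction b; simpl. - rewrite Nat.add_0_r; ring. - rewrite Nat.add_succ_r. simpl. rewrite IHb. ring. Qed.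

Lemma sm_shift n f : sm (S n) f = f O + sm n (fun i => f (S i)).
Proof. induction n; simpl in *; [ring|]. rewrite IHn. ring. Qed.

Lemma sm_ind n r g : sm n (fun i => if Nat.eqb i r then g i else 0) = if Nat.ltb r n then g r else 0.
Proof.
induction n; simpl; [reflexivity|]. rewrite IHn.
destruct (Nat.eqb_spec n r), (Nat.ltb_spec r n), (Nat.ltb_spec r (S n)); subst; try lia; ring.
Qed.

Lemma sm_rev n f : sm n f = sm n (fun i => f (n - 1 - i)%nat).
Proof.
induction n; [reflexivity|]. rewrite (sm_shift n (fun i => f (S n - 1 - i)%nat)).
change (sm (S n) f) with (sm n f + f n). rewrite IHn. rewrite Rplus_comm. f_equal.
- f_equal. lia.
- apply sm_ext. intros i Hi. f_equal. lia.
Qed.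

Lemma sum_range_sm a len f : sum_range a len f = sm len (fun i => f (a + i)%nat).
Proof.
revert a; induction len; intros a; [reflexivity|]. rewrite sm_shift. simpl. rewrite IHlen.
rewrite Nat.add_0_r. f_equal. apply sm_ext. intros. f_equal. lia.
Qed.

Lemma sum_f_R0_sm g K : sum_f_R0 g K = sm (S K) g.
Proof. induction K; simpl in *; [ring|]. rewrite IHK. reflexivity. Qed.

Lemma sm_geom n q : 0 <= q < 1 -> sm n (fun i => q ^ i) <= / (1 - q).
Proof.
intros Hq. assert (H : sm n (fun i => q ^ i) * (1 - q) = 1 - q ^ n).
{ induction n; simpl; [ring|]. rewrite Rmult_plus_distr_r, IHn. ring. }
assert (0 <= q ^ n) by (apply pow_le; lra).
apply (Rmult_le_reg_r (1 - q)); [lra|]. rewrite H, Rinv_l by lra. lra.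
Qed.

Lemma Dn_pow (a : R) (k : nat) : forall t, 0 < t ->
  Derive_n (fun t => Rpower t a) k t = falling a k * Rpower t (a - INR k)
  /\ ex_derive_n (fun t => Rpower t a) k t.
Proof.
induction k as [|k IH]; intros t Ht.
- simpl. split; [|exact I]. replace (a - 0) with a by ring. ring.
- assert (Hloc : locally t (fun s => Derive_n (fun t => Rpower t a) k s = falling a k * Rpower s (a - INR k))).
  { apply (filter_imp (fun s => 0 < s)). intros s Hs. apply (IH s Hs). apply (open_gt 0 t Ht). }
  assert (Hd : is_derive (fun s => falling a k * Rpower s (a - INR k)) t
                 (falling a k * ((a - INR k) * Rpower t (a - INR k - 1)))).
  { apply is_derive_scal. apply is_derive_Reals. apply derivable_pt_lim_power. exact Ht. }
  split.
  + cbn [Derive_n falling]. rewrite (Derive_ext_loc _ _ _ Hloc).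
    transitivity (falling a k * ((a - INR k) * Rpower t (a - INR k - 1))); [apply is_derive_unique; exact Hd|].
    rewrite S_INR. replace (a - (INR k + 1)) with (a - INR k - 1) by ring. ring.
  + simpl. apply (ex_derive_ext_loc _ _ _ (filter_imp _ _ (fun s H => eq_sym H) Hloc)).
    eexists. exact Hd.
Qed.

Lemma exp_le x y : x <= y -> exp x <= exp y.
Proof. intros H. destruct (Rle_lt_or_eq_dec _ _ H) as [H'|H']. apply Rlt_le, exp_increasing, H'. rewrite H'; lra. Qed.

Lemma Rpower_1_base e : Rpower 1 e = 1.
Proof. unfold Rpower. rewrite ln_1, Rmult_0_r. apply exp_0. Qed.

Lemma binom_taylor a u K : 0 < u -> a <= INR (S K) ->
  Rabs (Rpower (1 + u) a - sm (S K) (fun k => gbinom a k * u ^ k))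
  <= Rabs (gbinom a (S K)) * u ^ (S K).
Proof.
intros Hu Ha.
destruct (Taylor_Lagrange (fun t => Rpower t a) K 1 (1 + u)) as [z [Hz Heq]]; [lra| |].
{ intros t Ht k _. apply (Dn_pow a k t). lra. }
rewrite Heq. rewrite sum_f_R0_sm.
replace (sm (S K) (fun m => (1 + u - 1) ^ m / INR (fact m) * Derive_n (fun t => Rpower t a) m 1))
  with (sm (S K) (fun k => gbinom a k * u ^ k)).
2:{ apply sm_ext. intros i _. rewrite (proj1 (Dn_pow a i 1 ltac:(lra))). rewrite Rpower_1_base.
    unfold gbinom, fct. replace (1 + u - 1) with u by ring. field. apply not_0_INR, fact_neq_0. }
replace (1 + u - 1) with u by ring.
rewrite (proj1 (Dn_pow a (S K) z ltac:(lra))).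
assert (Hp : 0 < Rpower z (a - INR (S K)) <= 1).
{ split. apply exp_pos. unfold Rpower. rewrite <- exp_0. apply exp_le.
  assert (0 < ln z) by (rewrite <- ln_1; apply ln_increasing; lra). nra. }
unfold gbinom, fct.
replace (sm (S K) (fun k => falling a k / INR (fact k) * u ^ k) +
   u ^ S K / INR (fact (S K)) * (falling a (S K) * Rpower z (a - INR (S K))) -
   sm (S K) (fun k => falling a k / INR (fact k) * u ^ k))
  with ((falling a (S K) / INR (fact (S K)) * u ^ S K) * Rpower z (a - INR (S K))) by (field; apply not_0_INR, fact_neq_0).
rewrite Rabs_mult, Rabs_mult. rewrite (Rabs_pos_eq (u ^ S K)) by (apply pow_le; lra).
rewrite (Rabs_pos_eq (Rpower _ _)) by lra.
assert (0 <= Rabs (falling a (S K) / INR (fact (S K))) * u ^ S K) by (apply Rmult_le_pos; [apply Rabs_pos|apply pow_le; lra]).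
nra.
Qed.

Lemma exp_taylor x K : 0 < x ->
  exists r, exp x = sm (S K) (fun j => x ^ j / fct j) + r /\ 0 <= r <= x ^ (S K) / fct (S K) * exp x.
Proof.
intros Hx.
destruct (Taylor_Lagrange exp K 0 x) as [z [Hz Heq]]; [lra| |].
{ intros t _ k _. apply (ex_derive_n_ext_loc exp exp); [apply filter_forall; reflexivity|].
  destruct k; [exact I|]. eexists. apply (is_derive_n_exp (S k) t). }
assert (HD : forall m t, Derive_n exp m t = exp t) by (intros; apply is_derive_n_unique, is_derive_n_exp).
exists (x ^ S K / INR (fact (S K)) * exp z). split.
- rewrite Heq at 1. rewrite sum_f_R0_sm. f_equal. apply sm_ext. intros i _. rewrite HD, exp_0.
  unfold fct. replace (x - 0) with x by ring. ring.
  rewrite HD. replace (x - 0) with x by ring. reflexivity.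
- unfold fct. assert (0 < x ^ S K / INR (fact (S K))).
  { apply Rdiv_lt_0_compat. apply pow_lt; lra. apply lt_0_INR, lt_O_fact. }
  pose proof (exp_pos z). assert (exp z <= exp x) by (apply exp_le; lra). split; nra.
Qed.

Lemma fct_S n : fct (S n) = INR (S n) * fct n.
Proof. unfold fct. rewrite fact_simpl, mult_INR. reflexivity. Qed.
Lemma fct_pos n : 0 < fct n.
Proof. apply lt_0_INR, lt_O_fact. Qed.
Lemma fct_0 : fct 0 = 1.
Proof. reflexivity. Qed.

Lemma div_le a b c : 0 < b -> a <= c * b -> a / b <= c.
Proof. intros Hb H. apply (Rmult_le_reg_r b); auto. unfold Rdiv. rewrite Rmult_assoc, Rinv_l; lra. Qed.

Lemma gbinom_0 a : gbinom a 0 = 1.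
Proof. unfold gbinom, fct. simpl. field. Qed.
Lemma gbinom_S a m : gbinom a (S m) = gbinom a m * (a - INR m) / INR (S m).
Proof. unfold gbinom. rewrite fct_S. simpl falling. pose proof (fct_pos m). pose proof (lt_0_INR (S m) ltac:(lia)). field. lra. Qed.

Lemma gbinom_half_le K : Rabs (gbinom (/2) (S K)) <= /2.
Proof.
induction K.
- rewrite gbinom_S, gbinom_0. simpl. rewrite Rabs_pos_eq; lra.
- rewrite gbinom_S. unfold Rdiv. rewrite !Rabs_mult.
  assert (Hk : Rabs (/2 - INR (S K)) * Rabs (/ INR (S (S K))) <= 1).
  { rewrite Rabs_inv. pose proof (pos_INR K). rewrite !S_INR.
    rewrite Rabs_left1 by lra. rewrite Rabs_pos_eq by lra.
    apply (Rmult_le_reg_r (INR K + 1 + 1)); [lra|]. rewrite Rmult_assoc, Rinv_l by lra. lra. }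
  pose proof (Rabs_pos (gbinom (/ 2) (S K))). pose proof (Rabs_pos (/2 - INR (S K))).
  pose proof (Rabs_pos (/ INR (S (S K)))). nra.
Qed.

Lemma gbinom_m54_le K : Rabs (gbinom (-5/4) K) <= (5/4) ^ K.
Proof.
induction K.
- rewrite gbinom_0. simpl. rewrite Rabs_R1. lra.
- rewrite gbinom_S. unfold Rdiv. rewrite !Rabs_mult. simpl pow.
  assert (Hk : Rabs (-5/4 - INR K) * Rabs (/ INR (S K)) <= 5/4).
  { rewrite Rabs_inv. pose proof (pos_INR K). rewrite !S_INR.
    rewrite Rabs_left1 by lra. rewrite Rabs_pos_eq by lra.
    apply (Rmult_le_reg_r (INR K + 1)); [lra|]. rewrite Rmult_assoc, Rinv_l by lra. lra. }
  pose proof (Rabs_pos (gbinom (-5/4) K)). pose proof (Rabs_pos (-5/4 - INR K)).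
  pose proof (Rabs_pos (/ INR (S K))). nra.
Qed.

Definition bet (j i : nat) : R :=
  match j with
  | O => if Nat.eqb i 0 then 1 else 0
  | S j' => INR (S j') * fct (j' + 2 * i) / (fct i * fct (S j' + i)) * (-24) ^ i / 48 ^ (S j' + 2 * i)
  end.

Lemma bet_j0 j : bet j 0 = / 48 ^ j.
Proof.
destruct j; cbn [bet Nat.eqb]. - simpl. field.
- replace (j + 2 * 0)%nat with j by lia. replace (S j + 0)%nat with (S j) by lia.
  replace (S j + 2 * 0)%nat with (S j) by lia. rewrite fct_S. rewrite fct_0.
  pose proof (fct_pos j). pose proof (lt_0_INR (S j) ltac:(lia)).
  assert (48 ^ S j <> 0) by (apply pow_nonzero; lra). simpl pow at 1. field. lra.
Qed.

Ltac fsimpl := repeat rewrite fct_S; rewrite ?S_INR, ?plus_INR, ?mult_INR.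

Lemma bet_rec j i : bet (S (S j)) i = bet j (S i) / 24 - 2 * bet (S j) (S i).
Proof.
assert (HZ : (-24) ^ (S i) = -24 * (-24) ^ i) by reflexivity.
destruct j as [|j].
- cbn [bet Nat.eqb]. rewrite HZ.
  assert (H1 : 48 ^ (S (S 0) + 2 * i) = 48 ^ 2 * 48 ^ (2 * i)) by (rewrite <- pow_add; f_equal).
  assert (H2 : 48 ^ (S 0 + 2 * S i) = 48 ^ 3 * 48 ^ (2 * i)) by (rewrite <- pow_add; f_equal; lia).
  rewrite H1, H2. set (Z := (-24) ^ i). set (P := 48 ^ (2 * i)).
  replace (1 + 2 * i)%nat with (S (2 * i)) by lia.
  replace (0 + 2 * S i)%nat with (S (S (2 * i))) by lia.
  replace (S (S 0) + i)%nat with (S (S i)) by lia.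
  replace (S 0 + S i)%nat with (S (S i)) by lia.
  pose proof (fct_pos (2 * i)). pose proof (fct_pos i). pose proof (pos_INR i).
  assert (0 < P) by (apply pow_lt; lra).
  fsimpl. simpl. field. repeat split; lra.
- cbn [bet]. rewrite !HZ.
  assert (H1 : 48 ^ (S (S (S j)) + 2 * i) = 48 ^ 3 * 48 ^ (j + 2 * i)) by (rewrite <- pow_add; f_equal; lia).
  assert (H2 : 48 ^ (S j + 2 * S i) = 48 ^ 3 * 48 ^ (j + 2 * i)) by (rewrite <- pow_add; f_equal; lia).
  assert (H3 : 48 ^ (S (S j) + 2 * S i) = 48 ^ 4 * 48 ^ (j + 2 * i)) by (rewrite <- pow_add; f_equal; lia).
  rewrite H1, H2, H3. set (Z := (-24) ^ i). set (P := 48 ^ (j + 2 * i)).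
  replace (S (S j) + 2 * i)%nat with (S (S (j + 2 * i))) by lia.
  replace (j + 2 * S i)%nat with (S (S (j + 2 * i))) by lia.
  replace (S j + 2 * S i)%nat with (S (S (S (j + 2 * i)))) by lia.
  replace (S (S (S j)) + i)%nat with (S (S (S (j + i)))) by lia.
  replace (S j + S i)%nat with (S (S (j + i))) by lia.
  replace (S (S j) + S i)%nat with (S (S (S (j + i)))) by lia.
  pose proof (fct_pos (j + 2 * i)). pose proof (fct_pos i). pose proof (fct_pos (j + i)).
  pose proof (pos_INR i). pose proof (pos_INR j).
  assert (0 < P) by (apply pow_lt; lra).
  fsimpl. simpl. field. repeat split; lra.
Qed.

Lemma gb_half i : gbinom (/2) (S i) = bet 1 i * 24 ^ (S i).
Proof.
induction i.
- rewrite gbinom_S, gbinom_0, bet_j0. simpl. field.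
- rewrite gbinom_S, IHi. cbn [bet].
  assert (H1 : 48 ^ (1 + 2 * S i) = 48 ^ 2 * 48 ^ (1 + 2 * i)) by (rewrite <- pow_add; f_equal; lia).
  rewrite H1. set (P := 48 ^ (1 + 2 * i)).
  assert (HZ : (-24) ^ (S i) = -24 * (-24) ^ i) by reflexivity. rewrite HZ. set (Z := (-24) ^ i).
  assert (H2 : 24 ^ S (S i) = 24 * 24 ^ (S i)) by reflexivity. rewrite H2. set (T := 24 ^ (S i)).
  replace (0 + 2 * S i)%nat with (S (S (0 + 2 * i))) by lia.
  replace (1 + S i)%nat with (S (1 + i)) by lia.
  pose proof (fct_pos (0 + 2 * i)). pose proof (fct_pos i). pose proof (fct_pos (1 + i)).
  pose proof (pos_INR i). assert (0 < P) by (apply pow_lt; lra).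
  fsimpl. simpl. field. repeat split; lra.
Qed.

Definition sq (y : R) : R := sqrt (1 + y ^ 2 / 24).
Definition ww (y : R) : R := (sq y - 1) / y.

Lemma sq_facts y : 0 < y -> 1 < sq y /\ sq y ^ 2 = 1 + y ^ 2 / 24.
Proof.
intros Hy. unfold sq. assert (0 < y ^ 2 / 24) by (apply Rdiv_lt_0_compat; [apply pow_lt|]; lra).
split.
- pose proof (sqrt_lt_1 1 (1 + y ^ 2 / 24) ltac:(lra) ltac:(lra) ltac:(lra)) as HH. rewrite sqrt_1 in HH. exact HH.
- rewrite <- Rsqr_pow2. apply Rsqr_sqrt. lra.
Qed.

Lemma ww_facts y : 0 < y -> 0 < ww y /\ ww y <= y / 48 /\ ww y ^ 2 = / 24 - 2 * ww y / y.
Proof.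
intros Hy. destruct (sq_facts y Hy) as [H1 H2]. unfold ww.
assert (Hs : sq y - 1 = (y ^ 2 / 24) / (sq y + 1)).
{ replace (y ^ 2 / 24) with (sq y ^ 2 - 1) by lra. field. lra. }
split; [apply Rdiv_lt_0_compat; lra|]. split.
- rewrite Hs. apply div_le; [lra|]. apply div_le; [lra|]. nra.
- field_simplify; try lra. replace (sq y ^ 2) with (1 + y ^ 2 / 24) by lra. field. lra.
Qed.

Definition Pw (y : R) (j K : nat) : R := sm K (fun i => bet j i * y ^ (j + 2 * i)).
Definition Rem (y : R) (j K : nat) : R := ww y ^ j - Pw y j K.

Lemma Rem_0 y K : Rem y 0 (S K) = 0.
Proof.
unfold Rem, Pw. rewrite sm_shift. simpl. rewrite (sm_ext _ _ (fun _ => 0)). rewrite sm_zero. ring.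
intros i _. simpl. ring.
Qed.

Lemma Pw_rec y j K : 0 < y ->
  Pw y (S (S j)) K = Pw y j (S K) / 24 - 2 * Pw y (S j) (S K) / y.
Proof.
intros Hy. unfold Pw. rewrite !sm_shift. rewrite !bet_j0.
assert (E : sm K (fun i => bet (S (S j)) i * y ^ (S (S j) + 2 * i)) =
  sm K (fun i => bet j (S i) * y ^ (j + 2 * S i)) / 24 - 2 * sm K (fun i => bet (S j) (S i) * y ^ (S j + 2 * S i)) / y).
{ transitivity (sm K (fun i => bet j (S i) * y ^ (j + 2 * S i) * / 24 + bet (S j) (S i) * y ^ (S j + 2 * S i) * (-2 / y))).
  - apply sm_ext. intros i _. rewrite bet_rec.
    replace (j + 2 * S i)%nat with (S (S j) + 2 * i)%nat by lia.
    replace (S j + 2 * S i)%nat with (S (S (S j) + 2 * i)) by lia. rewrite (pow_S_eq y (S (S j) + 2 * i)). field. lra.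
  - rewrite sm_plus, !sm_scal_r. field. lra. }
rewrite E. replace (j + 2 * 0)%nat with j by lia. replace (S j + 2 * 0)%nat with (S j) by lia.
assert (48 ^ j <> 0) by (apply pow_nonzero; lra). simpl pow. field. lra.
Qed.

Lemma Rem_rec y j K : 0 < y ->
  Rem y (S (S j)) K = Rem y j (S K) / 24 - 2 * Rem y (S j) (S K) / y.
Proof.
intros Hy. unfold Rem. rewrite Pw_rec by lra. destruct (ww_facts y Hy) as [_ [_ Hw]].
replace (ww y ^ S (S j)) with (ww y ^ j * ww y ^ 2) by (simpl; ring).
rewrite Hw. simpl pow. field. lra.
Qed.

Lemma pow_u_24 y n : (y ^ 2 / 24) ^ n * 24 ^ n = y ^ (2 * n).
Proof.
induction n. simpl. ring.
replace (2 * S n)%nat with (2 + 2 * n)%nat by lia. rewrite pow_add, <- IHn. simpl. field.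
Qed.

Lemma Rem_1 y K : 0 < y -> Rabs (Rem y 1 K) <= (y / 9) * (y ^ 2 / 24) ^ K.
Proof.
intros Hy. set (u := y ^ 2 / 24).
assert (Hu : 0 < u) by (unfold u; apply Rdiv_lt_0_compat; [apply pow_lt|]; lra).
assert (Ha : / 2 <= INR (S K)) by (rewrite S_INR; pose proof (pos_INR K); lra).
pose proof (binom_taylor (/2) u K Hu Ha) as HT.
rewrite Rpower_sqrt in HT by lra.
rewrite sm_shift, gbinom_0, pow_O in HT.
assert (HP : sm K (fun i => gbinom (/ 2) (S i) * u ^ S i) = y * Pw y 1 K).
{ unfold Pw. rewrite <- sm_scal. apply sm_ext. intros i _. rewrite gb_half.
  pose proof (pow_u_24 y (S i)) as H24. fold u in H24.
  replace (1 + 2 * i)%nat with (S (2 * i)) by lia.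
  replace (2 * S i)%nat with (S (S (2 * i))) in H24 by lia.
  replace (bet 1 i * 24 ^ S i * u ^ S i) with (bet 1 i * (u ^ S i * 24 ^ S i)) by ring. rewrite H24, pow_S_eq. ring. }
rewrite HP in HT.
unfold Rem. rewrite pow_1. unfold ww, sq. fold u.
replace (((sqrt (1 + u) - 1) / y - Pw y 1 K)) with ((sqrt (1 + u) - (1 * 1 + y * Pw y 1 K)) / y) by (field; lra).
unfold Rdiv. rewrite Rabs_mult, Rabs_inv, (Rabs_pos_eq y) by lra.
pose proof (gbinom_half_le K).
assert (0 <= u ^ S K) by (apply pow_le; lra).
apply Rle_trans with (/2 * u ^ S K * / y).
{ apply Rmult_le_compat_r; [left; apply Rinv_0_lt_compat; lra|].
  eapply Rle_trans; [exact HT|]. apply Rmult_le_compat_r; lra. }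
rewrite pow_S_eq. unfold u. 
assert (0 <= (y ^ 2 / 24) ^ K) by (apply pow_le; apply Rmult_le_pos; [apply pow_le|]; lra).
apply (Rmult_le_reg_r y); [lra|]. field_simplify; [|lra]. 
replace (y ^ 2 * (y ^ 2 / 24) ^ K / 48) with ((y^2 * (y ^ 2 / 24) ^ K) * /48) by field.
replace (y ^ 2 * (y ^ 2 / 24) ^ K / 9) with ((y^2 * (y ^ 2 / 24) ^ K) * /9) by field.
assert (0 <= y ^ 2 * (y ^ 2 / 24) ^ K) by (apply Rmult_le_pos; [apply pow_le; lra| auto]).
nra.
Qed.

Lemma Rem_bound y : 0 < y -> forall j K, (1 <= j)%nat -> Rabs (Rem y j K) <= (y / 9) ^ j * (y ^ 2 / 24) ^ K.
Proof.
intros Hy.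
assert (H : forall j, (forall K, (1 <= j)%nat -> Rabs (Rem y j K) <= (y / 9) ^ j * (y ^ 2 / 24) ^ K) /\
                     (forall K, (1 <= S j)%nat -> Rabs (Rem y (S j) K) <= (y / 9) ^ (S j) * (y ^ 2 / 24) ^ K)).
{ induction j as [|j [IH1 IH2]].
  - split; [intros; lia|]. intros K _. rewrite pow_1. apply Rem_1; lra.
  - split; [exact IH2|]. intros K _. rewrite Rem_rec by lra.
    set (u := y ^ 2 / 24). assert (Hu : 0 < u) by (unfold u; apply Rdiv_lt_0_compat; [apply pow_lt|]; lra).
    assert (HuK : 0 < u ^ K) by (apply pow_lt; lra).
    pose proof (IH2 (S K) ltac:(lia)) as B2. fold u in B2. rewrite pow_S_eq in B2.
    destruct j as [|j].
    + rewrite Rem_0. pose proof (Rem_1 y (S K) Hy) as B. fold u in B.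
      replace (0 / 24 - 2 * Rem y 1 (S K) / y) with (-(2 / y) * Rem y 1 (S K)) by (field; lra).
      rewrite Rabs_mult, Rabs_Ropp, (Rabs_pos_eq (2 / y)) by (apply Rlt_le, Rdiv_lt_0_compat; lra).
      apply Rle_trans with (2 / y * (y / 9 * u ^ S K)).
      { apply Rmult_le_compat_l; [apply Rlt_le, Rdiv_lt_0_compat; lra|exact B]. }
      rewrite pow_S_eq. unfold u. simpl pow.
      replace (2 / y * (y / 9 * (y * (y * 1) / 24 * (y * (y * 1) / 24) ^ K))) with
        ((y * y) * (y * (y * 1) / 24) ^ K * (1 / 108)) by (field; lra).
      replace (y / 9 * (y / 9 * 1) * (y * (y * 1) / 24) ^ K) with ((y * y) * (y * (y * 1) / 24) ^ K * (1 / 81)) by field.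
      assert (0 < (y * (y * 1) / 24) ^ K) by (apply pow_lt; nra).
      apply Rmult_le_compat_l; [|lra]. apply Rmult_le_pos; nra.
    + pose proof (IH1 (S K) ltac:(lia)) as B1. fold u in B1.
      pose proof (IH2 (S K) ltac:(lia)) as B2'. fold u in B2'.
      set (a := (y / 9) ^ S j) in *. assert (Ha : 0 < a) by (unfold a; apply pow_lt; lra).
      set (Q := a * u ^ K * (y * y)).
      assert (HQ : 0 < Q) by (unfold Q; apply Rmult_lt_0_compat; [apply Rmult_lt_0_compat|]; nra).
      assert (Hu2 : u = y * y / 24) by (unfold u; simpl; field).
      assert (E1 : a * u ^ S K = Q / 24) by (unfold Q; replace (u ^ S K) with (u * u ^ K) by reflexivity; rewrite Hu2; field).
      assert (E2 : (y / 9) ^ S (S j) * u ^ S K = y * (Q / 216)) by (unfold Q; replace (u ^ S K) with (u * u ^ K) by reflexivity; replace ((y / 9) ^ S (S j)) with (y / 9 * a) by reflexivity; rewrite Hu2; field).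
      assert (E3 : (y / 9) ^ S (S (S j)) * u ^ K = Q / 81) by (unfold Q; replace ((y / 9) ^ S (S (S j))) with (y / 9 * (y / 9 * a)) by reflexivity; field).
      rewrite E1 in B1. rewrite E2 in B2'. rewrite E3.
      assert (Bz : Rabs (Rem y (S (S j)) (S K) / y) <= Q / 216).
      { unfold Rdiv at 1. rewrite Rabs_mult, Rabs_inv, (Rabs_pos_eq y) by lra.
        apply (Rmult_le_reg_r y); [lra|]. rewrite Rmult_assoc, Rinv_l by lra. lra. }
      apply Rabs_le_inv in B1. apply Rabs_le_inv in Bz. apply Rabs_le.
      replace (Rem y (S j) (S K) / 24 - 2 * Rem y (S (S j)) (S K) / y) with
        (Rem y (S j) (S K) / 24 - 2 * (Rem y (S (S j)) (S K) / y)) by (field; lra).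
      lra. }
intros j K Hj. apply (proj1 (H j) K Hj).
Qed.

Definition cc : R := 2 * PI / sqrt 3.
Definition tt (j i : nat) : R := cc ^ j / fct j * bet j i.

Lemma sqrt3_sq : sqrt 3 * sqrt 3 = 3.
Proof. apply sqrt_sqrt. lra. Qed.
Lemma sqrt3_pos : 0 < sqrt 3.
Proof. apply sqrt_lt_R0. lra. Qed.

Lemma cc_sq : cc ^ 2 = 4 * PI ^ 2 / 3.
Proof. unfold cc. pose proof sqrt3_sq. pose proof sqrt3_pos. replace ((2 * PI / sqrt 3) ^ 2) with (4 * PI ^ 2 / (sqrt 3 * sqrt 3)) by (simpl; field; lra). rewrite H. reflexivity. Qed.

Lemma pow_id0 d : (-24) ^ d / 48 ^ (2 * d) = / (-96) ^ d.
Proof.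
induction d. simpl. field.
replace (2 * S d)%nat with (2 + 2 * d)%nat by lia. rewrite pow_add.
assert (48 ^ (2 * d) <> 0) by (apply pow_nonzero; lra).
assert ((-96) ^ d <> 0) by (apply pow_nonzero; lra).
rewrite (pow_S_eq (-24)), (pow_S_eq (-96)).
replace (48 ^ 2) with 2304 by (simpl; ring).
replace ((-24) * (-24) ^ d / (2304 * 48 ^ (2 * d))) with ((-24) / 2304 * ((-24) ^ d / 48 ^ (2 * d))) by (field; auto).
rewrite IHd. field. auto.
Qed.

Lemma pow_id nu d : cc ^ (2 * nu) * (-24) ^ d / 48 ^ (2 * (nu + d)) = (- PI ^ 2 / 18) ^ nu / (-96) ^ (nu + d).
Proof.
induction nu.
- simpl (2 * 0)%nat. simpl (0 + d)%nat. rewrite pow_O. unfold Rdiv. rewrite Rmult_1_l, Rmult_1_l. apply pow_id0.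
- replace (2 * S nu)%nat with (2 + 2 * nu)%nat by lia.
  replace (2 * (S nu + d))%nat with (2 + 2 * (nu + d))%nat by lia.
  replace (S nu + d)%nat with (S (nu + d)) by lia.
  rewrite !pow_add. rewrite cc_sq.
  assert (48 ^ (2 * (nu + d)) <> 0) by (apply pow_nonzero; lra).
  assert ((-96) ^ (nu + d) <> 0) by (apply pow_nonzero; lra).
  replace (4 * PI ^ 2 / 3 * cc ^ (2 * nu) * (-24) ^ d / (48 ^ 2 * 48 ^ (2 * (nu + d))))
    with (PI ^ 2 / 1728 * (cc ^ (2 * nu) * (-24) ^ d / 48 ^ (2 * (nu + d)))) by (replace (48 ^ 2) with 2304 by (simpl; ring); field; auto).
  rewrite IHnu. rewrite (pow_S_eq (- PI ^ 2 / 18)), (pow_S_eq (-96)). field. auto.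
Qed.

Lemma e1_eq q : e1 q = sm (S q) (fun nu => tt (2 * nu) (q - nu)).
Proof.
destruct q as [|q].
- simpl. unfold tt. simpl. unfold fct. simpl. field.
- rewrite sm_shift. unfold tt at 1. replace (q - 0)%nat with q by lia. cbn [bet Nat.eqb]. 
  rewrite Rmult_0_r, Rplus_0_l.
  unfold e1, sumRR. rewrite sum_range_sm. replace (S (S q) - 1)%nat with (S q) by lia.
  rewrite <- sm_scal. apply sm_ext. intros i Hi.
  set (nu := S i). set (qq := S q). 
  assert (Hnu : (nu <= qq)%nat) by (unfold nu, qq; lia).
  replace (1 + i)%nat with nu by (unfold nu; lia).
  replace (S q - S i)%nat with (qq - nu)%nat by reflexivity.
  unfold tt. replace (2 * nu)%nat with (S (2 * i + 1)) by (unfold nu; lia).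
  cbn [bet].
  replace (2 * i + 1 + 2 * (qq - nu))%nat with (2 * qq - 1)%nat by (unfold nu, qq; lia).
  replace (S (2 * i + 1) + (qq - nu))%nat with (nu + qq)%nat by (unfold nu, qq; lia).
  replace (S (2 * i + 1) + 2 * (qq - nu))%nat with (2 * (nu + (qq - nu)))%nat by (unfold nu, qq; lia).
  replace (S (2 * i + 1)) with (2 * nu)%nat by (unfold nu; lia).
  replace (2 * nu - 1)%nat with (2 * i + 1)%nat by (unfold nu; lia).
  replace (2 * nu)%nat with (S (2 * i + 1)) by (unfold nu; lia).
  rewrite fct_S.
  pose proof (pow_id nu (qq - nu)) as HP. replace (nu + (qq - nu))%nat with qq in HP by lia.
  replace (2 * (nu + (qq - nu)))%nat with (2 * qq)%nat by lia.
  replace (S (2 * i + 1)) with (2 * nu)%nat in HP by (unfold nu; lia).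
  pose proof (fct_pos (2 * i + 1)). pose proof (fct_pos (nu + qq)). pose proof (fct_pos (qq - nu)).
  pose proof (fct_pos (2 * qq - 1)).
  assert (48 ^ (2 * qq) <> 0) by (apply pow_nonzero; lra).
  assert ((-96) ^ qq <> 0) by (apply pow_nonzero; lra).
  assert (0 < INR (S (2 * i + 1))) by (apply lt_0_INR; lia).
  replace (cc ^ S (2 * i + 1)) with (cc ^ (2 * nu)) by (f_equal; unfold nu; lia).
  replace ((- PI ^ 2 / 18) ^ nu) with (cc ^ (2 * nu) * (-24) ^ (qq - nu) / 48 ^ (2 * qq) * (-96) ^ qq) by (rewrite HP; field; auto).
  field. repeat split; lra.
Qed.

Lemma o1_eq q : o1 q = sm (S q) (fun nu => tt (2 * nu + 1) (q - nu)).
Proof.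
unfold o1, sumRR. rewrite sum_range_sm. replace (S q - 0)%nat with (S q) by lia.
rewrite <- sm_scal. apply sm_ext. intros nu Hnu. simpl (0 + nu)%nat.
unfold tt. replace (2 * nu + 1)%nat with (S (2 * nu)) by lia. cbn [bet].
replace (2 * nu + 2 * (q - nu))%nat with (2 * q)%nat by lia.
replace (S (2 * nu) + (q - nu))%nat with (nu + q + 1)%nat by lia.
replace (S (2 * nu) + 2 * (q - nu))%nat with (S (2 * q)) by lia.
rewrite fct_S, (pow_S_eq cc), (pow_S_eq 48).
pose proof (pow_id nu (q - nu)) as HP. replace (nu + (q - nu))%nat with q in HP by lia.
replace (2 * (nu + (q - nu)))%nat with (2 * q)%nat in HP by lia.
pose proof (fct_pos (2 * nu)). pose proof (fct_pos (nu + q + 1)). pose proof (fct_pos (q - nu)).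
pose proof (fct_pos (2 * q)). pose proof sqrt3_pos.
assert (48 ^ (2 * q) <> 0) by (apply pow_nonzero; lra).
assert ((-96) ^ q <> 0) by (apply pow_nonzero; lra).
assert (0 < INR (S (2 * nu))) by (apply lt_0_INR; lia).
replace ((- PI ^ 2 / 18) ^ nu) with (cc ^ (2 * nu) * (-24) ^ (q - nu) / 48 ^ (2 * q) * (-96) ^ q) by (rewrite HP; field; auto).
unfold cc. field. repeat split; lra.
Qed.

Definition gg k j i := e2 k * tt j i.
Definition coef B J m := sm B (fun k => sm J (fun j => sm B (fun i =>
   if Nat.eqb (2 * k + j + 2 * i) m then gg k j i else 0))).
Definition PA y B := sm B (fun k => e2 k * y ^ (2 * k)).
Definition PF y B J := sm J (fun j => cc ^ j / fct j * Pw y j B).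

Lemma sm_restrict n B f : (n <= B)%nat -> sm B (fun i => if Nat.ltb i n then f i else 0) = sm n f.
Proof.
intros H. replace B with (n + (B - n))%nat by lia. rewrite sm_split.
rewrite (sm_ext n _ f). rewrite (sm_ext (B - n) _ (fun _ => 0)). rewrite sm_zero. ring.
- intros i _. destruct (Nat.ltb_spec (n + i) n); [lia|reflexivity].
- intros i Hi. destruct (Nat.ltb_spec i n); [reflexivity|lia].
Qed.

Lemma sm_collapse D d z (y : R) : (d < D)%nat ->
  sm D (fun m => (if Nat.eqb d m then z else 0) * y ^ m) = z * y ^ d.
Proof.
intros H. rewrite (sm_ext D _ (fun m => if Nat.eqb m d then z * y ^ m else 0)).
- rewrite sm_ind. destruct (Nat.ltb_spec d D); [reflexivity|lia].
- intros m _. rewrite Nat.eqb_sym. destruct (Nat.eqb m d); ring.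
Qed.

Lemma prod_expand y B J : PA y B * PF y B J = sm (2 * B + J + 2 * B) (fun m => coef B J m * y ^ m).
Proof.
set (D := (2 * B + J + 2 * B)%nat).
unfold PA, PF. rewrite <- sm_scal_r.
transitivity (sm B (fun k => sm J (fun j => sm B (fun i => sm D (fun m =>
   (if Nat.eqb (2 * k + j + 2 * i) m then gg k j i else 0) * y ^ m))))).
- apply sm_ext. intros k Hk. rewrite <- sm_scal. apply sm_ext. intros j Hj.
  unfold Pw. rewrite <- !sm_scal. apply sm_ext. intros i Hi.
  rewrite sm_collapse by (unfold D; lia). unfold gg, tt. rewrite !pow_add. field.
  apply Rgt_not_eq, fct_pos.
- rewrite (sm_ext B _ (fun k => sm J (fun j => sm D (fun m => sm B (fun i =>
     (if Nat.eqb (2 * k + j + 2 * i) m then gg k j i else 0) * y ^ m))))).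
  2:{ intros k _. apply sm_ext. intros j _. apply sm_exch. }
  rewrite (sm_ext B _ (fun k => sm D (fun m => sm J (fun j => sm B (fun i =>
     (if Nat.eqb (2 * k + j + 2 * i) m then gg k j i else 0) * y ^ m))))).
  2:{ intros k _. apply sm_exch. }
  rewrite sm_exch. apply sm_ext. intros m _. unfold coef. rewrite <- sm_scal_r. apply sm_ext. intros k _.
  rewrite <- sm_scal_r. apply sm_ext. intros j _. rewrite <- sm_scal_r. reflexivity.
Qed.

Lemma coef_collapse B J m : (m < J)%nat ->
  coef B J m = sm B (fun k => sm B (fun i => if Nat.leb (2 * k + 2 * i) m then gg k (m - 2 * k - 2 * i) i else 0)).
Proof.
intros HJ. unfold coef. apply sm_ext. intros k _. rewrite sm_exch. apply sm_ext. intros i _.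
destruct (Nat.leb_spec (2 * k + 2 * i) m).
- rewrite (sm_ext J _ (fun j => if Nat.eqb j (m - 2 * k - 2 * i) then gg k j i else 0)).
  + rewrite sm_ind. destruct (Nat.ltb_spec (m - 2 * k - 2 * i) J); [reflexivity|lia].
  + intros j _. destruct (Nat.eqb_spec (2 * k + j + 2 * i) m), (Nat.eqb_spec j (m - 2 * k - 2 * i)); try lia; reflexivity.
- rewrite (sm_ext J _ (fun _ => 0)). apply sm_zero.
  intros j _. destruct (Nat.eqb_spec (2 * k + j + 2 * i) m); [lia|reflexivity].
Qed.

Lemma e1s_eq p : e1s p = sm (S p) (fun k => e2 k * e1 (p - k)).
Proof.
unfold e1s, sumRR. rewrite sum_range_sm. replace (S p - 0)%nat with (S p) by lia.
rewrite (sm_rev (S p) (fun k => e2 k * e1 (p - k))). apply sm_ext. intros k Hk.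
replace (0 + k)%nat with k by lia. replace (S p - 1 - k)%nat with (p - k)%nat by lia.
replace (p - (p - k))%nat with k by lia. ring.
Qed.

Lemma o1s_eq p : o1s p = sm (S p) (fun k => e2 k * o1 (p - k)).
Proof.
unfold o1s, sumRR. rewrite sum_range_sm. replace (S p - 0)%nat with (S p) by lia.
rewrite (sm_rev (S p) (fun k => e2 k * o1 (p - k))). apply sm_ext. intros k Hk.
replace (0 + k)%nat with k by lia. replace (S p - 1 - k)%nat with (p - k)%nat by lia.
replace (p - (p - k))%nat with k by lia. ring.
Qed.

Lemma coef_bstar B J m : (m < J)%nat -> (m < 2 * B)%nat -> coef B J m = bstar m.
Proof.
intros HJ HB. rewrite coef_collapse by exact HJ.
destruct (Nat.Even_or_Odd m) as [[p Hp]|[p Hp]]; subst m.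
- unfold bstar. replace (Nat.even (2 * p)) with true by (symmetry; apply Nat.even_spec; exists p; reflexivity).
  rewrite Nat.div2_double, e1s_eq.
  rewrite <- (sm_restrict (S p) B) by lia. apply sm_ext. intros k _.
  destruct (Nat.ltb_spec k (S p)).
  + rewrite e1_eq. rewrite (sm_rev (S (p - k))). rewrite <- sm_scal.
    rewrite <- (sm_restrict (S (p - k)) B) by lia. apply sm_ext. intros i _.
    destruct (Nat.leb_spec (2 * k + 2 * i) (2 * p)), (Nat.ltb_spec i (S (p - k))); try lia.
    * unfold gg. f_equal. f_equal; lia.
    * reflexivity.
  + rewrite (sm_ext B _ (fun _ => 0)). apply sm_zero. intros i _.
    destruct (Nat.leb_spec (2 * k + 2 * i) (2 * p)); [lia|reflexivity].
- unfold bstar. replace (Nat.even (2 * p + 1)) with false.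
  2:{ rewrite <- Nat.negb_odd. replace (Nat.odd (2 * p + 1)) with true by (symmetry; apply Nat.odd_spec; exists p; reflexivity). reflexivity. }
  replace (2 * p + 1)%nat with (S (2 * p)) by lia.
  rewrite Nat.div2_succ_double, o1s_eq.
  rewrite <- (sm_restrict (S p) B) by lia. apply sm_ext. intros k _.
  destruct (Nat.ltb_spec k (S p)).
  + rewrite o1_eq. rewrite (sm_rev (S (p - k))). rewrite <- sm_scal.
    rewrite <- (sm_restrict (S (p - k)) B) by lia. apply sm_ext. intros i _.
    destruct (Nat.leb_spec (2 * k + 2 * i) (S (2 * p))), (Nat.ltb_spec i (S (p - k))); try lia.
    * unfold gg. f_equal. f_equal; lia.
    * reflexivity.
  + rewrite (sm_ext B _ (fun _ => 0)). apply sm_zero. intros i _.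
    destruct (Nat.leb_spec (2 * k + 2 * i) (S (2 * p))); [lia|reflexivity].
Qed.

Lemma fct_binom : forall n a b, (a + b = n)%nat -> fct n <= 2 ^ n * fct a * fct b.
Proof.
induction n; intros a b H.
- assert (a = 0%nat) by lia. assert (b = 0%nat) by lia. subst. simpl. unfold fct; simpl. lra.
- destruct a as [|a].
  + simpl in H. subst b. pose proof (fct_pos (S n)). assert (1 <= 2 ^ S n) by (apply pow_R1_Rle; lra).
    rewrite fct_0. assert (0 <= (2 ^ S n - 1) * fct (S n)) by (apply Rmult_le_pos; lra). lra.
  + destruct b as [|b].
    * assert (n = a) by lia. subst n. pose proof (fct_pos (S a)). assert (1 <= 2 ^ S a) by (apply pow_R1_Rle; lra).
      rewrite fct_0. assert (0 <= (2 ^ S a - 1) * fct (S a)) by (apply Rmult_le_pos; lra). lra.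
    * pose proof (IHn a (S b) ltac:(lia)) as H1. pose proof (IHn (S a) b ltac:(lia)) as H2.
      rewrite (fct_S n). rewrite (fct_S a) at 1. rewrite (fct_S b) at 1.
      assert (HI : INR (S n) = INR (S a) + INR (S b)) by (rewrite <- plus_INR; f_equal; lia).
      rewrite HI. rewrite fct_S in H2. rewrite fct_S in H1.
      pose proof (lt_0_INR (S a) ltac:(lia)). pose proof (lt_0_INR (S b) ltac:(lia)).
      pose proof (fct_pos a). pose proof (fct_pos b). pose proof (fct_pos n).
      simpl pow. 
      assert (A1 : INR (S a) * fct n <= 2 ^ n * (INR (S a) * fct a) * (INR (S b) * fct b)).
      { replace (2 ^ n * (INR (S a) * fct a) * (INR (S b) * fct b)) with (INR (S a) * (2 ^ n * fct a * (INR (S b) * fct b))) by ring.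
        apply Rmult_le_compat_l; lra. }
      assert (A2 : INR (S b) * fct n <= 2 ^ n * (INR (S a) * fct a) * (INR (S b) * fct b)).
      { replace (2 ^ n * (INR (S a) * fct a) * (INR (S b) * fct b)) with (INR (S b) * (2 ^ n * (INR (S a) * fct a) * fct b)) by ring.
        apply Rmult_le_compat_l; lra. }
      nra.
Qed.

Definition tb (j i : nat) : R :=
  match j with O => if Nat.eqb i 0 then 1 else 0 | S _ => cc ^ j / fct j / 24 ^ (j + i) end.

Lemma cc_pos : 0 < cc.
Proof. unfold cc. pose proof sqrt3_pos. pose proof PI_RGT_0. apply Rdiv_lt_0_compat; lra. Qed.

Lemma tt_bound j i : Rabs (tt j i) <= tb j i.
Proof.
unfold tt, tb. destruct j as [|j].
- cbn [bet]. destruct (Nat.eqb i 0); simpl; unfold fct; simpl; rewrite ?Rmult_0_r, ?Rabs_R0; try lra.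
  rewrite Rabs_pos_eq; lra.
- cbn [bet]. pose proof cc_pos. pose proof (fct_pos (S j)).
  rewrite Rabs_mult. rewrite (Rabs_pos_eq (cc ^ S j / fct (S j))) by (apply Rlt_le, Rdiv_lt_0_compat; [apply pow_lt|]; lra).
  unfold Rdiv at 2. apply Rmult_le_compat_l; [apply Rlt_le, Rdiv_lt_0_compat; [apply pow_lt|]; lra|].
  pose proof (fct_pos (j + 2 * i)). pose proof (fct_pos i). pose proof (fct_pos (S j + i)).
  assert (H48 : 0 < 48 ^ (S j + 2 * i)) by (apply pow_lt; lra).
  assert (Hb : INR (S j) * fct (j + 2 * i) <= fct (S j + 2 * i)).
  { replace (S j + 2 * i)%nat with (S (j + 2 * i)) by lia. rewrite fct_S.
    apply Rmult_le_compat_r; [lra|]. apply le_INR. lia. }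
  pose proof (fct_binom (S j + 2 * i) i (S j + i) ltac:(lia)) as Hc.
  set (A := INR (S j) * fct (j + 2 * i)) in *. set (Bb := fct i * fct (S j + i)) in *. set (n := (S j + 2 * i)%nat) in *.
  assert (HB : 0 < Bb) by (unfold Bb; apply Rmult_lt_0_compat; auto).
  assert (HA : 0 <= A) by (unfold A; apply Rmult_le_pos; [apply pos_INR|lra]).
  assert (HAB : A / Bb <= 2 ^ n) by (apply div_le; [auto|]; assert (2 ^ n * Bb = 2 ^ n * fct i * fct (S j + i)) by (unfold Bb; ring); lra).
  assert (H24 : 0 < 24 ^ i) by (apply pow_lt; lra).
  assert (Habs : Rabs (A / Bb * (-24) ^ i * / 48 ^ n) = A / Bb * 24 ^ i * / 48 ^ n).
  { rewrite !Rabs_mult, Rabs_inv, <- RPow_abs. replace (Rabs (-24)) with 24 by (rewrite Rabs_left; lra).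
    rewrite (Rabs_pos_eq (A / Bb)) by (apply Rmult_le_pos; [auto|left; apply Rinv_0_lt_compat; auto]).
    rewrite (Rabs_pos_eq (48 ^ n)) by lra. reflexivity. }
  rewrite Habs.
  assert (E : 48 ^ n = 2 ^ n * 24 ^ n) by (rewrite <- Rpow_mult_distr; f_equal; lra).
  assert (E2 : 24 ^ n = 24 ^ (S j + i) * 24 ^ i) by (unfold n; rewrite <- pow_add; f_equal; lia).
  assert (0 < 2 ^ n) by (apply pow_lt; lra). assert (0 < 24 ^ (S j + i)) by (apply pow_lt; lra).
  apply Rle_trans with (2 ^ n * 24 ^ i * / 48 ^ n).
  { apply Rmult_le_compat_r; [left; apply Rinv_0_lt_compat; auto|]. apply Rmult_le_compat_r; lra. }
  rewrite E, E2. right. field. lra.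
Qed.

Lemma e2_bound k : Rabs (e2 k) <= (5 / 96) ^ k.
Proof.
unfold e2. unfold Rdiv. rewrite Rabs_mult, Rabs_inv, (Rabs_pos_eq (24 ^ k)) by (apply pow_le; lra).
pose proof (gbinom_m54_le k). assert (0 < 24 ^ k) by (apply pow_lt; lra).
replace ((5 * / 96) ^ k) with ((5 * / 4) ^ k * / 24 ^ k).
- apply Rmult_le_compat_r; [left; apply Rinv_0_lt_compat; lra| exact H].
- rewrite <- pow_inv, <- Rpow_mult_distr. f_equal. field.
Qed.

Definition rr : R := sqrt (5 / 96).
Definition xx : R := cc / (24 * rr).
Definition phi (j : nat) : R := xx ^ j / fct j.
Definition psi (j i : nat) : R :=
  match j with O => if Nat.eqb i 0 then 1 else 0 | S _ => phi j * (4 / 5) ^ i end.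

Lemma rr_pos : 0 < rr.
Proof. unfold rr. apply sqrt_lt_R0. lra. Qed.
Lemma rr_sq : rr ^ 2 = 5 / 96.
Proof. unfold rr. simpl. rewrite Rmult_1_r. apply sqrt_sqrt. lra. Qed.
Lemma xx_pos : 0 < xx.
Proof. unfold xx. pose proof cc_pos. pose proof rr_pos. apply Rdiv_lt_0_compat; lra. Qed.
Lemma phi_nonneg j : 0 <= phi j.
Proof. unfold phi. apply Rlt_le, Rdiv_lt_0_compat; [apply pow_lt, xx_pos|apply fct_pos]. Qed.
Lemma psi_nonneg j i : 0 <= psi j i.
Proof. destruct j; simpl. destruct (Nat.eqb i 0); lra. pose proof (phi_nonneg (S j)). assert (0 <= (4/5)^i) by (apply pow_le; lra). nra. Qed.

Lemma pow_rr2 n : rr ^ (2 * n) = (5 / 96) ^ n.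
Proof. rewrite pow_mult, rr_sq. reflexivity. Qed.

Lemma scale k j i : (5 / 96) ^ k * tb j i = rr ^ (2 * k + j + 2 * i) * psi j i.
Proof.
destruct j as [|j].
- simpl tb. simpl psi. destruct (Nat.eqb_spec i 0).
  + subst. replace (2 * k + 0 + 2 * 0)%nat with (2 * k)%nat by lia. rewrite pow_rr2. ring.
  + ring.
- cbn [tb psi]. unfold phi, xx. rewrite !pow_add, !pow_rr2.
  pose proof rr_pos. pose proof (fct_pos (S j)).
  assert (E1 : (cc / (24 * rr)) ^ S j = cc ^ S j / (24 ^ S j * rr ^ S j)).
  { unfold Rdiv. rewrite Rpow_mult_distr, pow_inv, Rpow_mult_distr. reflexivity. }
  assert (E2 : 24 ^ (S j + i) = 24 ^ S j * 24 ^ i) by apply pow_add.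
  assert (E3 : (5 / 96) ^ i * (4 / 5) ^ i * 24 ^ i = 1).
  { rewrite <- !Rpow_mult_distr. replace (5 / 96 * (4 / 5) * 24) with 1 by field. apply pow1. }
  rewrite E1. assert (0 < rr ^ S j) by (apply pow_lt; lra).
  assert (0 < 24 ^ S j) by (apply pow_lt; lra). assert (0 < 24 ^ i) by (apply pow_lt; lra).
  rewrite <- (Rmult_1_r ((5 / 96) ^ k * (cc ^ S j / fct (S j) / (24 ^ S j * 24 ^ i)))).
  rewrite <- E3. field. repeat split; lra.
Qed.

Definition Evs p := sm p (fun k => phi (2 * k + 2)).
Definition Ods p := sm (S p) (fun k => phi (2 * k + 1)).
Definition Ee := exp xx - 1 - xx.
Definition Eo := exp xx - 1 - xx ^ 2 / 2.
Definition Epar m := if Nat.even m then Ee else Eo.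

Lemma phi0 : phi 0 = 1.
Proof. unfold phi. simpl. unfold fct. simpl. field. Qed.
Lemma phi1 : phi 1 = xx.
Proof. unfold phi. simpl. unfold fct. simpl. field. Qed.
Lemma phi2 : phi 2 = xx ^ 2 / 2.
Proof. unfold phi. unfold fct. simpl. field. Qed.

Lemma full_sum p : sm (2 * p + 2) phi = 1 + Evs p + Ods p.
Proof.
induction p.
- unfold Evs, Ods. simpl. rewrite phi0. ring.
- replace (2 * S p + 2)%nat with (S (S (2 * p + 2))) by lia.
  change (sm (S (S (2 * p + 2))) phi) with (sm (2 * p + 2) phi + phi (2 * p + 2)%nat + phi (S (2 * p + 2))).
  rewrite IHp. unfold Evs, Ods. change (sm (S p) (fun k => phi (2 * k + 2)%nat)) with (sm p (fun k => phi (2 * k + 2)%nat) + phi (2 * p + 2)%nat).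
  change (sm (S (S p)) (fun k => phi (2 * k + 1)%nat)) with (sm (S p) (fun k => phi (2 * k + 1)%nat) + phi (2 * S p + 1)%nat).
  replace (2 * S p + 1)%nat with (S (2 * p + 2)) by lia. ring.
Qed.

Lemma partial_le_exp K : sm K phi <= exp xx.
Proof.
destruct K. simpl. pose proof (exp_pos xx). lra.
destruct (exp_taylor xx K xx_pos) as [r [Hr1 Hr2]]. rewrite Hr1. unfold phi. lra.
Qed.

Lemma Evs_ge p : (1 <= p)%nat -> xx ^ 2 / 2 <= Evs p.
Proof.
intros Hp. destruct p; [lia|]. unfold Evs. rewrite sm_shift. simpl (2 * 0 + 2)%nat. rewrite phi2.
pose proof (sm_nonneg p (fun i => phi (2 * S i + 2)) (fun i _ => phi_nonneg _)). lra.
Qed.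
Lemma Ods_ge p : xx <= Ods p.
Proof.
unfold Ods. rewrite sm_shift. simpl (2 * 0 + 1)%nat. rewrite phi1.
pose proof (sm_nonneg p (fun i => phi (2 * S i + 1)) (fun i _ => phi_nonneg _)). lra.
Qed.
Lemma Evs_nonneg p : 0 <= Evs p.
Proof. apply sm_nonneg. intros; apply phi_nonneg. Qed.

Lemma exp_ge3 : 1 + xx + xx ^ 2 / 2 <= exp xx.
Proof. pose proof (partial_le_exp 3). simpl in H. rewrite phi0, phi1 in H. rewrite phi2 in H. lra. Qed.

Lemma Ods_le p : Ods p <= Eo.
Proof.
unfold Eo. pose proof (partial_le_exp (2 * p + 2)) as H. rewrite full_sum in H.
destruct p.
- unfold Ods. simpl. rewrite phi1. pose proof exp_ge3. pose proof xx_pos.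
  assert (0 <= xx ^ 2) by (apply pow_le; lra). lra.
- pose proof (Evs_ge (S p) ltac:(lia)). lra.
Qed.

Lemma Evs_le p : Evs p <= Ee.
Proof. unfold Ee. pose proof (partial_le_exp (2 * p + 2)) as H. rewrite full_sum in H. pose proof (Ods_ge p). lra. Qed.

Lemma Epar_nonneg m : 0 <= Epar m.
Proof.
unfold Epar. pose proof exp_ge3. pose proof xx_pos. assert (0 <= xx ^ 2) by (apply pow_le; lra).
destruct (Nat.even m); unfold Ee, Eo; lra.
Qed.

Lemma sm_restrict_le n B f : (forall k, 0 <= f k) ->
  sm B (fun k => if Nat.ltb k n then f k else 0) <= sm n f.
Proof.
intros Hf. destruct (Nat.le_gt_cases n B).
- rewrite sm_restrict by lia. lra.
- rewrite (sm_ext B _ f). 2:{ intros k Hk. destruct (Nat.ltb_spec k n); [reflexivity|lia]. }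
  replace n with (B + (n - B))%nat by lia. rewrite sm_split.
  pose proof (sm_nonneg (n - B) (fun i => f (B + i)%nat) (fun i _ => Hf _)). lra.
Qed.

Lemma parsum_lt r B : sm B (fun k => if Nat.ltb (2 * k) r then phi (r - 2 * k) else 0) <= Epar r.
Proof.
destruct (Nat.Even_or_Odd r) as [[p Hp]|[p Hp]]; subst r.
- unfold Epar. replace (Nat.even (2 * p)) with true by (symmetry; apply Nat.even_spec; exists p; reflexivity).
  eapply Rle_trans; [|apply (Evs_le p)].
  rewrite (sm_ext B _ (fun k => if Nat.ltb k p then phi (2 * p - 2 * k) else 0)).
  2:{ intros k _. destruct (Nat.ltb_spec (2 * k) (2 * p)), (Nat.ltb_spec k p); try lia; reflexivity. }
  eapply Rle_trans; [apply sm_restrict_le; intros; apply phi_nonneg|].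
  unfold Evs. rewrite sm_rev. right. apply sm_ext. intros k Hk. f_equal. lia.
- unfold Epar. replace (Nat.even (2 * p + 1)) with false.
  2:{ rewrite <- Nat.negb_odd. replace (Nat.odd (2 * p + 1)) with true by (symmetry; apply Nat.odd_spec; exists p; reflexivity). reflexivity. }
  eapply Rle_trans; [|apply (Ods_le p)].
  rewrite (sm_ext B _ (fun k => if Nat.ltb k (S p) then phi (2 * p + 1 - 2 * k) else 0)).
  2:{ intros k _. destruct (Nat.ltb_spec (2 * k) (2 * p + 1)), (Nat.ltb_spec k (S p)); try lia; reflexivity. }
  eapply Rle_trans; [apply sm_restrict_le; intros; apply phi_nonneg|].
  unfold Ods. rewrite sm_rev. right. apply sm_ext. intros k Hk. f_equal. lia.
Qed.

Lemma parsum_le r B : sm B (fun k => if Nat.leb (2 * k) r then phi (r - 2 * k) else 0)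
  <= Epar r + (if Nat.even r then 1 else 0).
Proof.
destruct (Nat.Even_or_Odd r) as [[p Hp]|[p Hp]]; subst r.
- unfold Epar. replace (Nat.even (2 * p)) with true by (symmetry; apply Nat.even_spec; exists p; reflexivity).
  pose proof (Evs_le p).
  rewrite (sm_ext B _ (fun k => if Nat.ltb k (S p) then phi (2 * p - 2 * k) else 0)).
  2:{ intros k _. destruct (Nat.leb_spec (2 * k) (2 * p)), (Nat.ltb_spec k (S p)); try lia; reflexivity. }
  eapply Rle_trans; [apply sm_restrict_le; intros; apply phi_nonneg|].
  rewrite sm_rev, sm_shift. replace (2 * p - 2 * (S p - 1 - 0))%nat with 0%nat by lia. rewrite phi0.
  assert (sm p (fun i => phi (2 * p - 2 * (S p - 1 - S i))) = Evs p).
  { unfold Evs. apply sm_ext. intros k Hk. f_equal. lia. }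
  lra.
- unfold Epar. replace (Nat.even (2 * p + 1)) with false.
  2:{ rewrite <- Nat.negb_odd. replace (Nat.odd (2 * p + 1)) with true by (symmetry; apply Nat.odd_spec; exists p; reflexivity). reflexivity. }
  rewrite Rplus_0_r. eapply Rle_trans; [|apply (Ods_le p)].
  rewrite (sm_ext B _ (fun k => if Nat.ltb k (S p) then phi (2 * p + 1 - 2 * k) else 0)).
  2:{ intros k _. destruct (Nat.leb_spec (2 * k) (2 * p + 1)), (Nat.ltb_spec k (S p)); try lia; reflexivity. }
  eapply Rle_trans; [apply sm_restrict_le; intros; apply phi_nonneg|].
  unfold Ods. rewrite sm_rev. right. apply sm_ext. intros k Hk. f_equal. lia.
Qed.

Lemma psi_i0 j : psi j 0 = phi j.
Proof. destruct j; simpl. rewrite phi0. reflexivity. ring. Qed.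

Lemma per_i_bound B m i :
  sm B (fun k => if Nat.leb (2 * k + 2 * i) m then psi (m - 2 * k - 2 * i) i else 0)
  <= (if Nat.eqb i 0 then (if Nat.even m then 1 else 0) else 0) + (4 / 5) ^ i * Epar m.
Proof.
destruct i as [|i].
- simpl (Nat.eqb 0 0). rewrite pow_O, Rmult_1_l.
  rewrite (sm_ext B _ (fun k => if Nat.leb (2 * k) m then phi (m - 2 * k) else 0)).
  + pose proof (parsum_le m B). lra.
  + intros k _. replace (2 * k + 2 * 0)%nat with (2 * k)%nat by lia.
    replace (m - 2 * k - 2 * 0)%nat with (m - 2 * k)%nat by lia. destruct (Nat.leb (2 * k) m); [apply psi_i0|reflexivity].
- simpl (Nat.eqb (S i) 0). rewrite Rplus_0_l.
  assert (Hq : 0 <= (4 / 5) ^ S i) by (apply pow_le; lra).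
  destruct (Nat.le_gt_cases (2 * S i) m) as [Hm|Hm].
  + set (r := (m - 2 * S i)%nat).
    rewrite (sm_ext B _ (fun k => (4 / 5) ^ S i * (if Nat.ltb (2 * k) r then phi (r - 2 * k) else 0))).
    * rewrite sm_scal. apply Rmult_le_compat_l; [auto|].
      replace (Epar m) with (Epar r). apply parsum_lt.
      unfold Epar. replace (Nat.even m) with (Nat.even r). reflexivity. unfold r. rewrite <- (Nat.even_add_mul_2 (m - 2 * S i) (S i)). f_equal. lia.
    * intros k _. destruct (Nat.leb_spec (2 * k + 2 * S i) m), (Nat.ltb_spec (2 * k) r).
      -- replace (m - 2 * k - 2 * S i)%nat with (S (r - 2 * k - 1)) by (unfold r in *; lia).
         replace (r - 2 * k)%nat with (S (r - 2 * k - 1)) by lia. cbn [psi]. rewrite Rmult_comm. f_equal. f_equal. lia.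
      -- replace (m - 2 * k - 2 * S i)%nat with 0%nat by (unfold r in *; lia). cbn [psi Nat.eqb]. ring.
      -- unfold r in *; lia.
      -- ring.
  + rewrite (sm_ext B _ (fun _ => 0)). rewrite sm_zero. pose proof (Epar_nonneg m). nra.
    intros k _. destruct (Nat.leb_spec (2 * k + 2 * S i) m); [lia|reflexivity].
Qed.

Lemma j_collapse_le J k i m :
  sm J (fun j => if Nat.eqb (2 * k + j + 2 * i) m then psi j i else 0)
  <= if Nat.leb (2 * k + 2 * i) m then psi (m - 2 * k - 2 * i) i else 0.
Proof.
destruct (Nat.leb_spec (2 * k + 2 * i) m).
- rewrite (sm_ext J _ (fun j => if Nat.eqb j (m - 2 * k - 2 * i) then psi j i else 0)).
  + rewrite sm_ind. destruct (Nat.ltb (m - 2 * k - 2 * i) J); [lra|apply psi_nonneg].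
  + intros j _. destruct (Nat.eqb_spec (2 * k + j + 2 * i) m), (Nat.eqb_spec j (m - 2 * k - 2 * i)); try lia; reflexivity.
- rewrite (sm_ext J _ (fun _ => 0)). rewrite sm_zero. lra.
  intros j _. destruct (Nat.eqb_spec (2 * k + j + 2 * i) m); [lia|reflexivity].
Qed.

Lemma coef_bound B J m : Rabs (coef B J m) <= ((if Nat.even m then 1 else 0) + 5 * Epar m) * rr ^ m.
Proof.
pose proof rr_pos as Hrr. assert (Hrm : 0 < rr ^ m) by (apply pow_lt; lra).
unfold coef.
eapply Rle_trans.
{ eapply Rle_trans; [apply sm_abs|]. apply sm_le; intros k _.
  eapply Rle_trans; [apply sm_abs|]. apply sm_le; intros j _.
  eapply Rle_trans; [apply sm_abs|]. apply sm_le; intros i _.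
  instantiate (1 := fun i => rr ^ m * (if Nat.eqb (2 * k + j + 2 * i) m then psi j i else 0)). cbv beta.
  destruct (Nat.eqb_spec (2 * k + j + 2 * i) m).
  - rewrite <- e. rewrite <- scale. unfold gg. rewrite Rabs_mult.
    apply Rmult_le_compat; try apply Rabs_pos. apply e2_bound. apply tt_bound.
  - rewrite Rabs_R0. lra. }
eapply Rle_trans.
{ apply sm_le; intros k _. apply sm_le; intros j _. rewrite sm_scal. right. reflexivity. }
eapply Rle_trans.
{ apply sm_le; intros k _. rewrite sm_scal. rewrite sm_exch. apply Rmult_le_compat_l; [lra|].
  apply sm_le; intros i _. apply (j_collapse_le J k i m). }
rewrite sm_scal. rewrite Rmult_comm. apply Rmult_le_compat_r; [lra|].
rewrite sm_exch.
eapply Rle_trans; [apply sm_le; intros i _; apply per_i_bound|].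
rewrite sm_plus, sm_scal_r.
assert (H1 : sm B (fun i => if Nat.eqb i 0 then (if Nat.even m then 1 else 0) else 0) <= (if Nat.even m then 1 else 0)).
{ rewrite (sm_ind B 0 (fun _ => if Nat.even m then 1 else 0)). destruct (Nat.ltb 0 B), (Nat.even m); lra. }
assert (H2 : sm B (fun i => (4 / 5) ^ i) <= 5).
{ eapply Rle_trans; [apply sm_geom; lra|]. lra. }
change (sm B (pow (4 / 5))) with (sm B (fun i => (4 / 5) ^ i)). pose proof (Epar_nonneg m). assert (sm B (fun i => (4 / 5) ^ i) * Epar m <= 5 * Epar m) by (apply Rmult_le_compat_r; lra). lra.
Qed.

Lemma PI_bounds : 3.14159 < PI < 3.1416.
Proof.
destruct (PI_2_3_7_ineq 3) as [H1 H2].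
unfold tg_alt, PI_2_3_7_tg, Ratan_seq in *. simpl in *. lra.
Qed.

Lemma xx_sq : xx ^ 2 = 2 * PI ^ 2 / 45.
Proof.
unfold xx. pose proof rr_pos. replace ((cc / (24 * rr)) ^ 2) with (cc ^ 2 / (576 * rr ^ 2)) by (simpl; field; lra).
rewrite cc_sq, rr_sq. field.
Qed.

Lemma xx_bounds : 0.438648 <= xx ^ 2 <= 0.438652 /\ 0.66 <= xx <= 0.662309.
Proof.
rewrite xx_sq. pose proof PI_bounds. pose proof xx_pos.
assert (0.438648 <= 2 * PI ^ 2 / 45 <= 0.438652).
{ assert (0 < (PI - 3.14159) * (PI + 3.14159)) by (apply Rmult_lt_0_compat; lra).
  assert (0 < (3.1416 - PI) * (PI + 3.1416)) by (apply Rmult_lt_0_compat; lra). simpl. split; nra. }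
split; [exact H1|]. rewrite <- xx_sq in H1. simpl in H1. split; nra.
Qed.

Lemma fct_vals : fct 2 = 2 /\ fct 3 = 6 /\ fct 4 = 24 /\ fct 5 = 120 /\ fct 6 = 720 /\ fct 7 = 5040 /\ fct 8 = 40320.
Proof. repeat split; rewrite !fct_S, fct_0; simpl; ring. Qed.

Lemma exp_xx_bound : exp xx <= 1.93927.
Proof.
destruct (exp_taylor xx 7 xx_pos) as [r [Hr1 Hr2]].
destruct xx_bounds as [[A1 A2] [A3 A4]]. destruct fct_vals as [F2 [F3 [F4 [F5 [F6 [F7 F8]]]]]].
cbn [sm] in Hr1. rewrite fct_0 in Hr1.
replace (fct 1) with 1 in Hr1 by (unfold fct; simpl; ring).
rewrite F2, F3, F4, F5, F6, F7 in Hr1. rewrite F8 in Hr2.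
set (x := xx) in *.
assert (P3 : x ^ 3 <= 0.662309 * 0.438652) by (replace (x ^ 3) with (x * x ^ 2) by ring; apply Rmult_le_compat; nra).
assert (P4 : x ^ 4 <= 0.438652 * 0.438652) by (replace (x ^ 4) with (x ^ 2 * x ^ 2) by ring; apply Rmult_le_compat; nra).
assert (P5 : x ^ 5 <= 0.662309 * (0.438652 * 0.438652)) by (replace (x ^ 5) with (x * x ^ 4) by ring; apply Rmult_le_compat; try nra; apply pow_le; nra).
assert (P6 : x ^ 6 <= 0.438652 * (0.438652 * 0.438652)) by (replace (x ^ 6) with (x ^ 2 * x ^ 4) by ring; apply Rmult_le_compat; try nra; apply pow_le; nra).
assert (P7 : x ^ 7 <= 0.662309 * (0.438652 * (0.438652 * 0.438652))) by (replace (x ^ 7) with (x * x ^ 6) by ring; apply Rmult_le_compat; try nra; apply pow_le; nra).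
assert (P8 : x ^ 8 <= (0.438652 * 0.438652) * (0.438652 * 0.438652)) by (replace (x ^ 8) with (x ^ 4 * x ^ 4) by ring; apply Rmult_le_compat; try nra; apply pow_le; nra).
assert (Q : 0 <= x ^ 8) by (apply pow_le; nra).
pose proof (exp_pos x).
assert (Hr3 : r <= (0.438652 * 0.438652 * (0.438652 * 0.438652)) / 40320 * exp x).
{ eapply Rle_trans; [exact (proj2 Hr2)|]. apply Rmult_le_compat_r; [lra|]. lra. }
rewrite pow_O, pow_1 in Hr1.
lra.
Qed.

Lemma Kc_bound m : (if Nat.even m then 1 else 0) + 5 * Epar m <= 3.61.
Proof.
pose proof exp_xx_bound. destruct xx_bounds as [[A1 A2] [A3 A4]].
unfold Epar, Ee, Eo. destruct (Nat.even m); lra.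
Qed.

Lemma pow_le1 c n : 0 <= c <= 1 -> c ^ n <= 1.
Proof. intros H. induction n; simpl; [lra|]. assert (0 <= c ^ n) by (apply pow_le; lra). nra. Qed.

Lemma exp_le2 t : 0 <= t <= 1/2 -> exp t <= 2.
Proof.
intros H. pose proof (exp_ineq1_le (- t)). rewrite <- (Rinv_inv (exp t)), <- exp_Ropp.
pose proof (exp_pos (- t)). apply Rle_trans with (/ (1 - t)).
- apply Rinv_le_contravar; lra.
- apply (Rmult_le_reg_r (1 - t)); [lra|]. rewrite Rinv_l by lra. lra.
Qed.

Lemma main_est N y : (3 <= N)%nat -> 0 < y <= 1 / 100 ->
  Rabs (Rpower (1 + y ^ 2 / 24) (-5/4) * exp (cc * ww y) - sm (N + 2) (fun m => bstar m * y ^ m))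
  <= 2 / 10 * rr ^ N * y ^ (N + 2).
Proof.
intros HN Hy.
set (B := (N + 2)%nat). set (J := (N + 3)%nat).
set (u := y ^ 2 / 24).
assert (Hu : 0 < u) by (unfold u; apply Rdiv_lt_0_compat; [apply pow_lt|]; lra).
pose proof rr_pos as Hrr. assert (Hrr1 : rr <= 1/4).
{ assert (rr ^ 2 <= (1/4) ^ 2) by (rewrite rr_sq; lra). nra. }
assert (Hrr2 : 1/5 <= rr). { assert ((1/5) ^ 2 <= rr ^ 2) by (rewrite rr_sq; lra). nra. }
pose proof cc_pos as Hcc.
assert (Hcc2 : cc <= 4).
{ unfold cc. pose proof PI_bounds. pose proof sqrt3_pos. pose proof sqrt3_sq.
  apply div_le; [lra|]. nra. }
destruct (ww_facts y ltac:(lra)) as [Hw1 [Hw2 _]].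
set (w := ww y) in *.
pose proof (binom_taylor (-5/4) u (N + 1) Hu ltac:(pose proof (pos_INR (S (N+1))); lra)) as HA.
replace (S (N + 1)) with B in HA by (unfold B; lia).
assert (HPA : sm B (fun k => gbinom (-5 / 4) k * u ^ k) = PA y B).
{ unfold PA. apply sm_ext. intros k _. unfold e2. rewrite <- (pow_u_24 y k). fold u.
  assert (0 < 24 ^ k) by (apply pow_lt; lra). field. lra. }
rewrite HPA in HA.
set (rA := Rpower (1 + u) (-5/4) - PA y B) in HA.
assert (HrA : Rabs rA <= (5 / 96) ^ B * y ^ (2 * B)).
{ eapply Rle_trans; [exact HA|]. 
  replace ((5 / 96) ^ B * y ^ (2 * B)) with ((5 / 4) ^ B * u ^ B).
  - apply Rmult_le_compat_r; [apply pow_le; lra|apply gbinom_m54_le].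
  - rewrite <- (pow_u_24 y B). fold u. rewrite <- !Rpow_mult_distr. f_equal. field. }
assert (Hcw : 0 < cc * w) by (apply Rmult_lt_0_compat; lra).
destruct (exp_taylor (cc * w) (N + 2) Hcw) as [rE [HE1 HE2]].
replace (S (N + 2)) with J in HE1, HE2 by (unfold J; lia).
assert (HF : exp (cc * w) = PF y B J + sm J (fun j => cc ^ j / fct j * Rem y j B) + rE).
{ rewrite HE1. unfold PF. rewrite <- sm_plus. f_equal. apply sm_ext. intros j _.
  unfold Rem. fold w. rewrite Rpow_mult_distr. field. apply Rgt_not_eq, fct_pos. }
set (rS := sm J (fun j => cc ^ j / fct j * Rem y j B)) in HF.
assert (HrS : Rabs rS <= 2 * (y ^ 2 / 24) ^ B).
{ unfold rS. eapply Rle_trans; [apply sm_abs|].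
  apply Rle_trans with (sm J (fun j => (1/2) ^ j * (y ^ 2 / 24) ^ B)).
  - apply sm_le. intros j _. destruct j as [|j].
    + unfold B. replace (N + 2)%nat with (S (N + 1)) by lia. rewrite Rem_0, Rmult_0_r, Rabs_R0.
      apply Rmult_le_pos; apply pow_le; [lra|]. apply Rlt_le; fold u; exact Hu.
    + rewrite Rabs_mult. rewrite (Rabs_pos_eq (cc ^ S j / fct (S j))) by (apply Rlt_le, Rdiv_lt_0_compat; [apply pow_lt; lra|apply fct_pos]).
      pose proof (Rem_bound y ltac:(lra) (S j) B ltac:(lia)) as HR.
      assert (Hf : 1 <= fct (S j)) by (unfold fct; apply (le_INR 1); apply lt_O_fact).
      assert (Hp : 0 < cc ^ S j) by (apply pow_lt; lra).
      apply Rle_trans with (cc ^ S j * ((y / 9) ^ S j * (y ^ 2 / 24) ^ B)).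
      * apply Rle_trans with (cc ^ S j * Rabs (Rem y (S j) B)).
        -- apply Rmult_le_compat_r; [apply Rabs_pos|]. apply div_le; [apply fct_pos|]. nra.
        -- apply Rmult_le_compat_l; lra.
      * rewrite <- Rmult_assoc, <- Rpow_mult_distr. apply Rmult_le_compat_r; [apply pow_le; apply Rlt_le; fold u; exact Hu|].
        apply pow_incr. split; [apply Rmult_le_pos; lra|]. nra.
  - rewrite sm_scal_r. apply Rmult_le_compat_r; [apply pow_le; apply Rlt_le; fold u; exact Hu|].
    eapply Rle_trans; [apply sm_geom; lra|]. lra. }
assert (HrE : Rabs rE <= 2 * (cc * y / 48) ^ J).
{ rewrite Rabs_pos_eq by lra. destruct HE2 as [_ HE2]. eapply Rle_trans; [exact HE2|].
  assert (Hf : 1 <= fct J) by (unfold fct; apply (le_INR 1); apply lt_O_fact).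
  assert (Hx : exp (cc * w) <= 2) by (apply exp_le2; split; nra).
  assert (Hp : (cc * w) ^ J <= (cc * y / 48) ^ J) by (apply pow_incr; split; nra).
  assert (0 <= (cc * w) ^ J) by (apply pow_le; lra).
  assert (0 <= (cc * w) ^ J / fct J <= (cc * w) ^ J) by (split; [apply Rmult_le_pos; [lra|left; apply Rinv_0_lt_compat, fct_pos]|apply div_le; [apply fct_pos|nra]]).
  pose proof (exp_pos (cc * w)). nra. }
assert (HFle : Rabs (exp (cc * w)) <= 2).
{ rewrite Rabs_pos_eq by (apply Rlt_le, exp_pos). apply exp_le2. split; nra. }
assert (HPAle : Rabs (PA y B) <= 2).
{ unfold PA. eapply Rle_trans; [apply sm_abs|].
  apply Rle_trans with (sm B (fun k => (5 / 96 * y ^ 2) ^ k)).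
  - apply sm_le. intros k _. rewrite Rabs_mult, (Rabs_pos_eq (y ^ (2 * k))) by (apply pow_le; lra).
    rewrite Rpow_mult_distr, pow_mult. apply Rmult_le_compat_r; [apply pow_le; apply pow_le; lra|apply e2_bound].
  - eapply Rle_trans; [apply sm_geom; split; [apply Rmult_le_pos; [lra|apply pow_le; lra]|simpl; nra]|].
    assert (y ^ 2 <= 1) by (simpl; nra).
    apply Rle_trans with (/ (1/2)); [apply Rinv_le_contravar; [lra|]; nra|lra]. }
set (D := (2 * B + J + 2 * B)%nat).
assert (HD : (N + 2 <= D)%nat) by (unfold D, B, J; lia).
pose proof (prod_expand y B J) as HPP. fold D in HPP.
replace D with (N + 2 + (D - (N + 2)))%nat in HPP by lia. rewrite sm_split in HPP.
rewrite (sm_ext (N + 2) _ (fun m => bstar m * y ^ m)) in HPP.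
2:{ intros m Hm. rewrite coef_bstar; [reflexivity| |]; unfold J, B; lia. }
set (S := sm (N + 2) (fun m => bstar m * y ^ m)) in *.
set (T := sm (D - (N + 2)) (fun i => coef B J (N + 2 + i) * y ^ (N + 2 + i))) in HPP.
set (a := rr * y).
assert (Ha : 0 < a <= 1/400) by (unfold a; split; nra).
assert (HT : Rabs T <= 3.61 * a ^ (N + 2) * / (1 - a)).
{ unfold T. eapply Rle_trans; [apply sm_abs|].
  apply Rle_trans with (sm (D - (N + 2)) (fun i => 3.61 * a ^ (N + 2) * a ^ i)).
  - apply sm_le. intros i _. rewrite Rabs_mult, (Rabs_pos_eq (y ^ _)) by (apply pow_le; lra).
    rewrite Rmult_assoc, <- pow_add. unfold a. rewrite Rpow_mult_distr.
    pose proof (coef_bound B J (N + 2 + i)) as Hc. pose proof (Kc_bound (N + 2 + i)).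
    assert (0 < rr ^ (N + 2 + i)) by (apply pow_lt; lra).
    assert (0 < y ^ (N + 2 + i)) by (apply pow_lt; lra).
    rewrite <- Rmult_assoc. apply Rmult_le_compat_r; [lra|]. nra.
  - rewrite sm_scal. apply Rmult_le_compat_l; [apply Rmult_le_pos; [lra|apply pow_le; lra]|]. apply sm_geom. lra. }
set (Z := rr ^ N * y ^ (N + 2)).
assert (HZ : 0 < Z) by (unfold Z; apply Rmult_lt_0_compat; apply pow_lt; lra).
assert (E1 : a ^ (N + 2) = 5 / 96 * Z).
{ unfold a, Z. rewrite Rpow_mult_distr, pow_add, <- rr_sq. ring. }
assert (E2 : (y ^ 2 / 24) ^ B = Z * ((y / (24 * rr)) ^ N * (y / 24) ^ 2)).
{ unfold Z, B. replace (y ^ 2 / 24) with (y * (y / 24)) by (simpl; field).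
  rewrite Rpow_mult_distr, (pow_add (y / 24)). replace (y / 24) with (rr * (y / (24 * rr))) at 1 by (field; lra).
  rewrite Rpow_mult_distr. ring. }
assert (E3 : (cc * y / 48) ^ J = Z * ((cc / (48 * rr)) ^ N * ((cc / 48) ^ 3 * y))).
{ unfold Z, J. replace (cc * y / 48) with ((cc / 48) * y) by field.
  rewrite Rpow_mult_distr, (pow_add (cc / 48)). replace (cc / 48) with (rr * (cc / (48 * rr))) at 1 by (field; lra).
  rewrite Rpow_mult_distr. replace (N + 3)%nat with (N + 2 + 1)%nat by lia. rewrite (pow_add y). ring. }
assert (E4 : (5 / 96) ^ B * y ^ (2 * B) = Z * (rr ^ (N + 4) * y ^ (N + 2))).
{ unfold Z, B. rewrite <- pow_rr2. replace (2 * (N + 2))%nat with (N + (N + 4))%nat by lia.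
  rewrite pow_add. replace (N + (N + 4))%nat with ((N + 2) + (N + 2))%nat by lia. rewrite (pow_add y). ring. }
assert (B1 : (y / (24 * rr)) ^ N <= 1) by (apply pow_le1; split; [apply Rlt_le, Rdiv_lt_0_compat; lra|apply div_le; lra]).
assert (B2 : (cc / (48 * rr)) ^ N <= 1) by (apply pow_le1; split; [apply Rlt_le, Rdiv_lt_0_compat; lra|apply div_le; lra]).
assert (B3 : rr ^ (N + 4) <= 1) by (apply pow_le1; lra).
assert (B4 : y ^ (N + 2) <= 1 / 10000).
{ rewrite pow_add. assert (y ^ N <= 1) by (apply pow_le1; lra). assert (0 <= y ^ N) by (apply pow_le; lra).
  simpl (y ^ 2). nra. }
assert (B5 : (y / 24) ^ 2 <= 1 / 1000000) by (simpl; nra).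
assert (B6 : (cc / 48) ^ 3 * y <= 1 / 100000).
{ assert (0 < cc / 48 <= 1 / 12) by (split; [apply Rdiv_lt_0_compat|apply div_le]; lra).
  assert ((cc / 48) ^ 3 <= (1/12) ^ 3) by (apply pow_incr; lra). simpl in *. nra. }
assert (P1 : 0 <= (y / (24 * rr)) ^ N) by (apply pow_le; apply Rlt_le, Rdiv_lt_0_compat; lra).
assert (P2 : 0 <= (cc / (48 * rr)) ^ N) by (apply pow_le; apply Rlt_le, Rdiv_lt_0_compat; lra).
assert (P3 : 0 <= rr ^ (N + 4)) by (apply pow_le; lra).
assert (P4 : 0 <= (y / 24) ^ 2) by (apply pow_le; lra).
assert (P5 : 0 <= (cc / 48) ^ 3 * y) by (apply Rmult_le_pos; [apply pow_le; lra|lra]).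
assert (P6 : 0 <= y ^ (N + 2)) by (apply pow_le; lra).
change (sm B (fun m => bstar m * y ^ m)) with S.
replace (Rpower (1 + u) (-5 / 4) * exp (cc * w) - S) with
  (T + PA y B * (rS + rE) + rA * exp (cc * w)).
2:{ unfold rA. rewrite HF. replace T with (PA y B * PF y B J - S) by lra. ring. }
replace (2 / 10 * rr ^ N * y ^ (N + 2)) with (2 / 10 * Z) by (unfold Z; ring).
eapply Rle_trans; [apply Rabs_triang|]. eapply Rle_trans; [apply Rplus_le_compat_r; apply Rabs_triang|].
rewrite !Rabs_mult.
assert (HrSE : Rabs (rS + rE) <= 2 * (y ^ 2 / 24) ^ B + 2 * (cc * y / 48) ^ J).
{ eapply Rle_trans; [apply Rabs_triang|]. lra. }
rewrite E2 in HrSE. rewrite E3 in HrSE. rewrite E4 in HrA. rewrite E1 in HT.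
assert (HT2 : Rabs T <= 3.61 * (5 / 96 * Z) * (1000 / 997)).
{ eapply Rle_trans; [exact HT|]. apply Rmult_le_compat_l; [nra|]. 
  apply Rle_trans with (/ (997/1000)); [apply Rinv_le_contravar; lra|lra]. }
assert (X1 : Z * ((y / (24 * rr)) ^ N * (y / 24) ^ 2) <= Z * (1 / 1000000)).
{ apply Rmult_le_compat_l; [lra|]. nra. }
assert (X2 : Z * ((cc / (48 * rr)) ^ N * ((cc / 48) ^ 3 * y)) <= Z * (1 / 100000)).
{ apply Rmult_le_compat_l; [lra|]. nra. }
assert (X3 : Z * (rr ^ (N + 4) * y ^ (N + 2)) <= Z * (1 / 10000)).
{ apply Rmult_le_compat_l; [lra|]. nra. }
assert (Y1 : Rabs (PA y B) * Rabs (rS + rE) <= 2 * (2 * (Z * (1 / 1000000)) + 2 * (Z * (1 / 100000)))).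
{ apply Rmult_le_compat; try apply Rabs_pos; lra. }
assert (Y2 : Rabs rA * Rabs (exp (cc * w)) <= Z * (1 / 10000) * 2).
{ apply Rmult_le_compat; try apply Rabs_pos; lra. }
change (y ^ B) with (y ^ (N + 2)). replace (2 / 10 * rr ^ N * y ^ (N + 2)) with (2 / 10 * Z) by (unfold Z; ring). lra.
Qed.

Lemma lnR a b : ln (Rpower a b) = b * ln a.
Proof. unfold Rpower. apply ln_exp. Qed.
Lemma lnS a : 0 < a -> ln (sqrt a) = ln a / 2.
Proof. intros H. rewrite <- Rpower_sqrt by exact H. rewrite lnR. field. Qed.
Lemma lnD a b : 0 < a -> 0 < b -> ln (a / b) = ln a - ln b.
Proof. intros. unfold Rdiv. rewrite ln_mult, ln_Rinv; try lra. apply Rinv_0_lt_compat; lra. Qed.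
Lemma exp_div a b : exp a / exp b = exp (a - b).
Proof. pose proof (exp_pos b). replace a with ((a - b) + b) at 1 by ring. rewrite exp_plus. field. lra. Qed.

Lemma sqrt24 : sqrt 24 = 2 * sqrt 2 * sqrt 3.
Proof.
replace 24 with ((2 * 2) * (2 * 3)) by ring. rewrite sqrt_mult by lra. rewrite sqrt_square by lra.
rewrite sqrt_mult by lra. ring.
Qed.

Lemma exp_part x : 0 < x ->
  exp (PI / (3 * sqrt 2) * sqrt (24 * x + 1)) / exp (2 * PI * sqrt (x / 3)) = exp (cc * ww (/ sqrt x)).
Proof.
intros Hx. rewrite exp_div. f_equal.
assert (HX : 0 < sqrt x) by (apply sqrt_lt_R0; lra).
assert (Hxx : sqrt x * sqrt x = x) by (apply sqrt_sqrt; lra).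
set (v := 1 + (/ sqrt x) ^ 2 / 24).
assert (Hv : 24 * x + 1 = 24 * x * v).
{ unfold v. assert (Hy2 : (/ sqrt x) ^ 2 = / x) by (simpl; rewrite Rmult_1_r, <- Rinv_mult, Hxx; reflexivity).
  rewrite Hy2. field. lra. }
assert (Hvp : 0 < v) by (unfold v; assert (0 <= (/ sqrt x) ^ 2 / 24) by (apply Rmult_le_pos; [apply pow2_ge_0|lra]); lra).
rewrite Hv. rewrite (sqrt_mult (24 * x) v) by lra. rewrite sqrt_mult by lra.
rewrite sqrt_div_alt by lra. rewrite sqrt24.
unfold ww, sq. fold v.
pose proof sqrt3_pos. pose proof sqrt3_sq. assert (0 < sqrt 2) by (apply sqrt_lt_R0; lra).
unfold cc. replace (3 * sqrt 2) with (sqrt 3 * sqrt 3 * sqrt 2) by (rewrite H0; ring).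
field. repeat split; lra.
Qed.

Lemma pref_part x : 0 < x ->
  8 * Rpower 3 (3/4) * sqrt PI * Rpower x (5/4) / ((24 * x + 1) * sqrt (PI / (6 * sqrt 2) * sqrt (24 * x + 1)))
  = Rpower (1 + (/ sqrt x) ^ 2 / 24) (-5/4).
Proof.
intros Hx.
assert (Hxx : sqrt x * sqrt x = x) by (apply sqrt_sqrt; lra).
assert (HX : 0 < sqrt x) by (apply sqrt_lt_R0; lra).
assert (Hv : 1 + (/ sqrt x) ^ 2 / 24 = (24 * x + 1) / (24 * x)).
{ assert (Hy2 : (/ sqrt x) ^ 2 = / x) by (simpl; rewrite Rmult_1_r, <- Rinv_mult, Hxx; reflexivity).
  rewrite Hy2. field. lra. }
rewrite Hv.
pose proof PI_RGT_0 as HPI. assert (H2 : 0 < sqrt 2) by (apply sqrt_lt_R0; lra).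
assert (HD : 0 < 24 * x + 1) by lra.
assert (HsD : 0 < sqrt (24 * x + 1)) by (apply sqrt_lt_R0; lra).
assert (Hin : 0 < PI / (6 * sqrt 2) * sqrt (24 * x + 1)) by (apply Rmult_lt_0_compat; [apply Rdiv_lt_0_compat|]; lra).
assert (HsL : 0 < sqrt (PI / (6 * sqrt 2) * sqrt (24 * x + 1))) by (apply sqrt_lt_R0; lra).
assert (HR3 : 0 < Rpower 3 (3/4)) by apply exp_pos.
assert (HRx : 0 < Rpower x (5/4)) by apply exp_pos.
assert (HsPI : 0 < sqrt PI) by (apply sqrt_lt_R0; lra).
apply ln_inv.
- apply Rdiv_lt_0_compat; [|apply Rmult_lt_0_compat; lra]. repeat apply Rmult_lt_0_compat; lra.
- apply exp_pos.
- rewrite lnR.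
  assert (LA : ln (8 * Rpower 3 (3/4) * sqrt PI * Rpower x (5/4)) = ln 8 + 3/4 * ln 3 + ln PI / 2 + 5/4 * ln x).
  { rewrite ln_mult by (try (repeat apply Rmult_lt_0_compat); lra).
    rewrite ln_mult by (try (repeat apply Rmult_lt_0_compat); lra).
    rewrite ln_mult by lra. rewrite lnR, lnR, lnS by lra. ring. }
  assert (LD : ln ((24 * x + 1) * sqrt (PI / (6 * sqrt 2) * sqrt (24 * x + 1))) =
     ln (24 * x + 1) + (ln PI - (ln 6 + ln 2 / 2) + ln (24 * x + 1) / 2) / 2).
  { rewrite ln_mult by lra. rewrite lnS by lra. rewrite ln_mult by (try apply Rdiv_lt_0_compat; lra).
    rewrite lnD by lra. rewrite ln_mult by lra. rewrite lnS, lnS by lra. ring. }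
  assert (LV : ln ((24 * x + 1) / (24 * x)) = ln (24 * x + 1) - (ln 24 + ln x)).
  { rewrite lnD by lra. rewrite ln_mult by lra. ring. }
  rewrite lnD by (try (repeat apply Rmult_lt_0_compat); lra).
  rewrite LA, LD, LV.
  assert (L8 : ln 8 = 3 * ln 2).
  { replace 8 with (2 * (2 * 2)) by ring. rewrite !ln_mult by lra. ring. }
  assert (L6 : ln 6 = ln 2 + ln 3).
  { replace 6 with (2 * 3) by ring. rewrite ln_mult by lra. ring. }
  assert (L24 : ln 24 = 3 * ln 2 + ln 3).
  { replace 24 with (8 * 3) by ring. rewrite ln_mult by lra. rewrite L8. ring. }
  rewrite L8, L6, L24. lra.
Qed.

Lemma Rpower_half_pow a m : 0 < a -> Rpower a (INR m / 2) = sqrt a ^ m.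
Proof.
intros Ha. replace (INR m / 2) with (/ 2 * INR m) by field.
rewrite <- Rpower_mult, Rpower_sqrt by exact Ha. apply Rpower_pow. apply sqrt_lt_R0; exact Ha.
Qed.

Lemma nN_big N : (3 <= N)%nat -> 10000 <= nN N.
Proof.
intros HN. unfold nN.
assert (HN3 : 3 <= INR N) by (replace 3 with (INR 3) by (simpl; ring); apply le_INR; exact HN).
assert (HL : 1 <= ln (6 * INR N + 8)).
{ pose proof exp_le_3. rewrite <- (ln_exp 1). left. apply ln_increasing; [apply exp_pos|lra]. }
set (b := 3 * (3 * INR N + 4) * ln (6 * INR N + 8) / (13 / 10) ^ 2).
assert (Hb : 23 <= b).
{ unfold b. apply Rle_trans with (3 * 13 * 1 / (13/10)^2); [simpl; lra|].
  unfold Rdiv. apply Rmult_le_compat_r; [simpl; lra|]. apply Rmult_le_compat; lra. }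
apply Rle_trans with (23 ^ 4); [simpl; lra|]. apply pow_incr. lra.
Qed.

Theorem lemma3p14 (N n : nat) :
  (3 <= N)%nat -> nN N <= INR n ->
  exists E : R,
    Rabs E <= (2/10) * Rpower (5/96) (INR N / 2) * Rpower (INR n) (- (INR N + 2) / 2) /\
    exp (PI / (3 * sqrt 2) * sqrt (24 * INR n + 1)) / ((24 * INR n + 1) * lam n)
    = exp (2 * PI * sqrt (INR n / 3)) /
        (8 * Rpower 3 (3/4) * sqrt PI * Rpower (INR n) (5/4)) *
      (sumRR 0 (N + 1) (fun m => bstar m / Rpower (INR n) (INR m / 2)) + E).
Proof.
intros HN Hn.
pose proof (nN_big N HN) as Hbig.
set (x := INR n) in *.
assert (Hx : 10000 <= x) by lra.
assert (HX : 100 <= sqrt x).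
{ rewrite <- (sqrt_square 100) by lra. apply sqrt_le_1; lra. }
assert (HX0 : 0 < sqrt x) by lra.
set (y := / sqrt x).
assert (Hy : 0 < y <= 1 / 100).
{ unfold y. split. apply Rinv_0_lt_compat; lra.
  apply Rle_trans with (/ 100); [apply Rinv_le_contravar; lra|lra]. }
set (LHS := exp (PI / (3 * sqrt 2) * sqrt (24 * x + 1)) / ((24 * x + 1) * lam n)).
set (P := exp (2 * PI * sqrt (x / 3)) / (8 * Rpower 3 (3/4) * sqrt PI * Rpower x (5/4))).
set (Ssum := sumRR 0 (N + 1) (fun m => bstar m / Rpower x (INR m / 2))).
assert (HP : 0 < P).
{ unfold P. apply Rdiv_lt_0_compat; [apply exp_pos|].
  pose proof PI_RGT_0. assert (0 < sqrt PI) by (apply sqrt_lt_R0; lra).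
  assert (0 < Rpower 3 (3/4)) by apply exp_pos. assert (0 < Rpower x (5/4)) by apply exp_pos.
  repeat apply Rmult_lt_0_compat; lra. }
exists (LHS / P - Ssum). split.
2:{ fold LHS P Ssum. field. lra. }
assert (HLP : LHS / P = Rpower (1 + y ^ 2 / 24) (-5/4) * exp (cc * ww y)).
{ unfold LHS, P, lam. fold x. unfold y.
  rewrite <- exp_part by lra. rewrite <- pref_part by lra.
  pose proof PI_RGT_0. assert (0 < sqrt PI) by (apply sqrt_lt_R0; lra).
  assert (0 < Rpower 3 (3/4)) by apply exp_pos. assert (0 < Rpower x (5/4)) by apply exp_pos.
  assert (0 < sqrt (PI / (6 * sqrt 2) * sqrt (24 * x + 1))).
  { apply sqrt_lt_R0. apply Rmult_lt_0_compat; [apply Rdiv_lt_0_compat; [lra|]|apply sqrt_lt_R0; lra].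
    assert (0 < sqrt 2) by (apply sqrt_lt_R0; lra). lra. }
  pose proof (exp_pos (PI / (3 * sqrt 2) * sqrt (24 * x + 1))).
  pose proof (exp_pos (2 * PI * sqrt (x / 3))).
  field. repeat split; lra. }
assert (HS : Ssum = sm (N + 2) (fun m => bstar m * y ^ m)).
{ unfold Ssum, sumRR. rewrite sum_range_sm. replace (S (N + 1) - 0)%nat with (N + 2)%nat by lia.
  apply sm_ext. intros m _. simpl (0 + m)%nat. rewrite Rpower_half_pow by lra. unfold y.
  rewrite pow_inv. reflexivity. }
assert (HB : 2 / 10 * Rpower (5 / 96) (INR N / 2) * Rpower x (- (INR N + 2) / 2) = 2 / 10 * rr ^ N * y ^ (N + 2)).
{ rewrite Rpower_half_pow by lra. fold rr.
  replace (- (INR N + 2) / 2) with (- (INR (N + 2) / 2)) by (rewrite plus_INR; simpl; field).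
  rewrite Rpower_Ropp, Rpower_half_pow by lra. unfold y. rewrite pow_inv. reflexivity. }
rewrite HB, HLP, HS. apply main_est; assumption.
Qed.
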